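(* Let $a\in\mathbf{R}$, $0<\tau_0^*<\tau^*$, and let $p(z,\xi)=(\xi+ia)^2\int_{\tau_0^*}^{\tau^*}e^{-(\tau^*-s)(\xi+ia)^2}w(s,z)\,ds$. Then: (i) for every $b>0$ and all integers $\alpha,\beta\ge0$ there exists $C>0$ such that $|\partial_z^\alpha\partial_\xi^\beta p(z,\xi)|\le C\langle\xi\rangle^{-\beta}$ for all $z\in\mathbf{C}$ with $|\operatorname{Im}z|<b$ and all $\xi\in\mathbf{R}$; (ii) there exists $C>0$ such that $|p(x,\xi)-w(\tau^*,x)|\le C\langle\xi\rangle^{-2}$ for all $x,\xi\in\mathbf{R}$.
   Context: $\langle\xi\rangle=\sqrt{1+|\xi|^2}$. Fix $a\in\mathbf{R}$; $K_a(\tau,y)=\frac{1}{\sqrt{4\pi\tau}}\exp(-\frac{|y|^2}{4\tau}+ay)$, and $w(\tau,x)=\int_0^\infty K_a(\tau,x-y)\,dy=\pi^{-1/2}e^{\tau a^2}\int_{-\infty}^{(x-2\tau a)/\sqrt{4\tau}}e^{-\theta^2}d\theta$, extended holomorphically in $x\in\mathbf{C}$ by the latter formula. The function $p$ is the symbol (acting on the right variable) of the operator $f\mapsto H_a\int_{\tau_0^*}^{\tau^*}U_a(\tau^*-s)[w(s,\cdot)f]\,ds$, where $H_a=-(\frac{d}{dy}-a)^2$ and $(U_a(\tau)\varphi)(y)=\int K_a(\tau,y-x)\varphi(x)dx$. *)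

(* Defs.v *)
From Stdlib Require Import Reals ClassicalEpsilon.
Open Scope R_scope.

Definition Cplx := (R * R)%type.
Definition RtoC (x : R) : Cplx := (x, 0).
Definition Cadd (z u : Cplx) : Cplx := (fst z + fst u, snd z + snd u).
Definition Copp (z : Cplx) : Cplx := (- fst z, - snd z).
Definition Csub (z u : Cplx) : Cplx := Cadd z (Copp u).
Definition Cmul (z u : Cplx) : Cplx :=
  (fst z * fst u - snd z * snd u, fst z * snd u + snd z * fst u).
Definition Cscal (r : R) (z : Cplx) : Cplx := (r * fst z, r * snd z).
Definition Cexp (z : Cplx) : Cplx :=
  (exp (fst z) * cos (snd z), exp (fst z) * sin (snd z)).
Definition Cnorm (z : Cplx) : R := sqrt (fst z ^ 2 + snd z ^ 2).

(* Riemann integral on [a,b] (value chosen by epsilon among the values of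
   RiemannInt; it is the Riemann integral whenever f is integrable). *)
Definition RInt_val (f : R -> R) (a b : R) : R :=
  epsilon (inhabits 0)
    (fun v => exists pr : Riemann_integrable f a b, RiemannInt pr = v).

Definition CInt (f : R -> Cplx) (a b : R) : Cplx :=
  (RInt_val (fun t => fst (f t)) a b, RInt_val (fun t => snd (f t)) a b).

Definition CInt_0_inf (f : R -> Cplx) : Cplx :=
  epsilon (inhabits (0, 0))
    (fun v => forall eps, 0 < eps -> exists M, forall T, M <= T ->
       Cnorm (Csub (CInt f 0 T) v) < eps).

Definition K_a (a tau : R) (y : Cplx) : Cplx :=
  Cscal (/ sqrt (4 * PI * tau))
    (Cexp (Cadd (Cscal (- / (4 * tau)) (Cmul y y)) (Cscal a y))).

(* w(tau, z) = int_0^oo K_a(tau, z - y) dy, z complex (this integral converges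
   absolutely for every complex z and is the holomorphic extension). *)
Definition w_fun (a tau : R) (z : Cplx) : Cplx :=
  CInt_0_inf (fun y => K_a a tau (Csub z (RtoC y))).

Definition p_sym (a tau0 taus : R) (z : Cplx) (xi : R) : Cplx :=
  let q2 := Cmul (xi, a) (xi, a) in
  Cmul q2 (CInt (fun s => Cmul (Cexp (Cscal (- (taus - s)) q2)) (w_fun a s z))
             tau0 taus).

Definition Cderiv (f : Cplx -> Cplx) (z : Cplx) : Cplx :=
  epsilon (inhabits (0, 0))
    (fun L => forall eps, 0 < eps -> exists delta, 0 < delta /\
       forall h : Cplx, Cnorm h < delta ->
         Cnorm (Csub (Csub (f (Cadd z h)) (f z)) (Cmul L h)) <= eps * Cnorm h).

Definition Rderiv_C (g : R -> Cplx) (x : R) : Cplx :=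
  epsilon (inhabits (0, 0))
    (fun L => forall eps, 0 < eps -> exists delta, 0 < delta /\
       forall h : R, Rabs h < delta ->
         Cnorm (Csub (Csub (g (x + h)) (g x)) (Cscal h L)) <= eps * Rabs h).

Definition Dz (F : Cplx -> R -> Cplx) : Cplx -> R -> Cplx :=
  fun z xi => Cderiv (fun u => F u xi) z.
Definition Dxi (F : Cplx -> R -> Cplx) : Cplx -> R -> Cplx :=
  fun z xi => Rderiv_C (fun t => F z t) xi.

Definition japan (xi : R) : R := sqrt (1 + xi ^ 2).

(* Main.v *)
From Stdlib Require Import Reals Lra Lia Psatz ClassicalEpsilon FunctionalExtensionality List.
From Coquelicot Require Import Coquelicot.
Require Import Defs.
Open Scope R_scope.

Definition C0 : Cplx := (0,0).
Definition C1 : Cplx := (1,0).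
Ltac csimpl := unfold Csub, Cadd, Copp, Cmul, Cscal, RtoC, C0, C1 in *; cbn [fst snd] in *.
Ltac ceq := repeat match goal with z : Cplx |- _ => destruct z | z : (R * R)%type |- _ => destruct z end; csimpl; f_equal; ring.




Lemma Cnorm_mul x y : Cnorm (Cmul x y) = Cnorm x * Cnorm y.
Proof. exact (Cmod_mult x y). Qed.
Lemma Cnorm_ge0 x : 0 <= Cnorm x.
Proof. exact (Cmod_ge_0 x). Qed.
Lemma Cnorm_tri x y : Cnorm (Cadd x y) <= Cnorm x + Cnorm y.
Proof. exact (Cmod_triangle x y). Qed.
Lemma Cnorm_opp x : Cnorm (Copp x) = Cnorm x.
Proof. exact (Cmod_opp x). Qed.
Lemma Cnorm_sub_tri x y : Cnorm (Csub x y) <= Cnorm x + Cnorm y.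
Proof. unfold Csub. rewrite <- (Cnorm_opp y). apply Cnorm_tri. Qed.
Lemma Cnorm_fst x : Rabs (fst x) <= Cnorm x.
Proof. exact (re_le_Cmod x). Qed.
Lemma Cnorm_snd x : Rabs (snd x) <= Cnorm x.
Proof. assert (A := Rmax_Cmod x). change (Cmod x) with (Cnorm x) in A. pose proof (Rmax_r (Rabs (fst x)) (Rabs (snd x))). lra. Qed.
Lemma Cnorm_le_sum x : Cnorm x <= Rabs (fst x) + Rabs (snd x).
Proof.
  unfold Cnorm. destruct x as [u v]; cbn [fst snd].
  rewrite <- (sqrt_Rsqr (Rabs u + Rabs v)) by (pose proof (Rabs_pos u); pose proof (Rabs_pos v); lra).
  apply sqrt_le_1_alt. unfold Rsqr. pose proof (Rabs_pos u); pose proof (Rabs_pos v).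
  rewrite <- (pow2_abs u), <- (pow2_abs v). nra.
Qed.
Lemma Cnorm_scal r x : Cnorm (Cscal r x) = Rabs r * Cnorm x.
Proof.
  replace (Cscal r x) with (Cmul (r,0) x) by ceq. rewrite Cnorm_mul. f_equal.
  exact (Cmod_R r).
Qed.
Lemma Cnorm_pair0 r : Cnorm (r,0) = Rabs r.
Proof. exact (Cmod_R r). Qed.
Lemma Cnorm_C0 : Cnorm C0 = 0.
Proof. unfold C0. rewrite Cnorm_pair0. apply Rabs_R0. Qed.
Lemma Cnorm_eq0 x : Cnorm x = 0 -> x = C0.
Proof. intro H. exact (Cmod_eq_0 x H). Qed.
Lemma Cnorm_Cexp z : Cnorm (Cexp z) = exp (fst z).
Proof.
  unfold Cnorm, Cexp; cbn [fst snd].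
  replace ((exp (fst z) * cos (snd z)) ^ 2 + (exp (fst z) * sin (snd z)) ^ 2)
    with (exp (fst z) ^ 2 * (Rsqr (sin (snd z)) + Rsqr (cos (snd z)))) by (unfold Rsqr; ring).
  rewrite sin2_cos2. rewrite Rmult_1_r. rewrite sqrt_pow2; auto. left; apply exp_pos.
Qed.
Lemma Cexp_add u v : Cexp (Cadd u v) = Cmul (Cexp u) (Cexp v).
Proof.
  destruct u as [u1 u2]; destruct v as [v1 v2]; unfold Cexp, Cadd, Cmul; simpl.
  rewrite exp_plus, cos_plus, sin_plus. f_equal; ring.
Qed.

Fixpoint Cpow (z : Cplx) (k : nat) : Cplx :=
  match k with O => C1 | S k' => Cmul z (Cpow z k') end.
Lemma Cnorm_pow z k : Cnorm (Cpow z k) = Cnorm z ^ k.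
Proof.
  induction k; simpl. unfold C1. rewrite Cnorm_pair0. apply Rabs_R1.
  rewrite Cnorm_mul, IHk. ring.
Qed.

Definition RD (g : R -> Cplx) (x : R) (L : Cplx) : Prop :=
  forall eps, 0 < eps -> exists delta, 0 < delta /\
       forall h : R, Rabs h < delta ->
         Cnorm (Csub (Csub (g (x + h)) (g x)) (Cscal h L)) <= eps * Rabs h.

Lemma RD_unique g x L1 L2 : RD g x L1 -> RD g x L2 -> L1 = L2.
Proof.
  intros H1 H2.
  assert (Hn : Cnorm (Csub L1 L2) = 0).
  { apply Rle_antisym; [| apply Cnorm_ge0].
    apply Rnot_lt_le. intro Hp.
    set (e := Cnorm (Csub L1 L2) / 4).
    assert (He : 0 < e) by (unfold e; lra).
    destruct (H1 e He) as [d1 [Hd1 P1]]. destruct (H2 e He) as [d2 [Hd2 P2]].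
    set (h := Rmin d1 d2 / 2).
    assert (Hh : 0 < h) by (unfold h; apply Rmin_case; lra).
    assert (Hh1 : Rabs h < d1) by (rewrite Rabs_right by lra; unfold h;
        pose proof (Rmin_l d1 d2); lra).
    assert (Hh2 : Rabs h < d2) by (rewrite Rabs_right by lra; unfold h;
        pose proof (Rmin_r d1 d2); lra).
    specialize (P1 h Hh1). specialize (P2 h Hh2).
    assert (E : Cscal h (Csub L1 L2) =
      Csub (Csub (Csub (g (x+h)) (g x)) (Cscal h L2)) (Csub (Csub (g (x+h)) (g x)) (Cscal h L1))) by ceq.
    pose proof (Cnorm_sub_tri (Csub (Csub (g (x+h)) (g x)) (Cscal h L2)) (Csub (Csub (g (x+h)) (g x)) (Cscal h L1))).
    rewrite <- E in H. rewrite Cnorm_scal in H. rewrite Rabs_right in * by lra.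
    unfold e in *. nra. }
  apply Cnorm_eq0 in Hn. unfold C0 in Hn. destruct L1, L2; csimpl.
  inversion Hn. f_equal; lra.
Qed.

Lemma RD_Rderiv g x L : RD g x L -> Rderiv_C g x = L.
Proof.
  intro H. unfold Rderiv_C.
  apply (RD_unique g x); auto.
  unfold RD. apply (epsilon_spec (inhabits (0,0)) (fun L0 => forall eps, 0 < eps -> exists delta, 0 < delta /\
       forall h : R, Rabs h < delta ->
         Cnorm (Csub (Csub (g (x + h)) (g x)) (Cscal h L0)) <= eps * Rabs h)).
  exists L. exact H.
Qed.

Lemma RD_comp g x L : RD g x L <->
  derivable_pt_lim (fun t => fst (g t)) x (fst L) /\ derivable_pt_lim (fun t => snd (g t)) x (snd L).
Proof.
  split.
  - intro H. split; intros eps Heps;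
    destruct (H (eps/2)) as [d [Hd P]]; try lra;
    exists (mkposreal d Hd); intros h Hh0 Hh; simpl in Hh; specialize (P h Hh).
    + pose proof (Cnorm_fst (Csub (Csub (g (x + h)) (g x)) (Cscal h L))). csimpl.
      replace ((fst (g (x + h)) - fst (g x)) / h - fst L) with
        ((fst (g (x + h)) + - fst (g x) + - (h * fst L)) / h) by (field; auto).
      unfold Rdiv. rewrite Rabs_mult, Rabs_inv.
      apply (Rmult_lt_reg_r (Rabs h)). apply Rabs_pos_lt; auto.
      rewrite Rmult_assoc, Rinv_l by (apply Rabs_no_R0; auto). assert (0 < Rabs h) by (apply Rabs_pos_lt; auto). nra.
    + pose proof (Cnorm_snd (Csub (Csub (g (x + h)) (g x)) (Cscal h L))). csimpl.
      replace ((snd (g (x + h)) - snd (g x)) / h - snd L) with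
        ((snd (g (x + h)) + - snd (g x) + - (h * snd L)) / h) by (field; auto).
      unfold Rdiv. rewrite Rabs_mult, Rabs_inv.
      apply (Rmult_lt_reg_r (Rabs h)). apply Rabs_pos_lt; auto.
      rewrite Rmult_assoc, Rinv_l by (apply Rabs_no_R0; auto). assert (0 < Rabs h) by (apply Rabs_pos_lt; auto). nra.
  - intros [H1 H2] eps Heps.
    destruct (H1 (eps/2)) as [d1 P1]; try lra. destruct (H2 (eps/2)) as [d2 P2]; try lra.
    exists (Rmin d1 d2). split. apply Rmin_case; apply cond_pos.
    intros h Hh. destruct (Req_dec h 0) as [->|Hh0].
    + rewrite Rplus_0_r. unfold Csub, Cadd, Copp, Cscal. simpl.
      replace (fst (g x) + - fst (g x) + - (0 * fst L)) with 0 by ring.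
      replace (snd (g x) + - snd (g x) + - (0 * snd L)) with 0 by ring.
      fold C0. rewrite Cnorm_C0, Rabs_R0. lra.
    + assert (Hh1 : Rabs h < d1) by (pose proof (Rmin_l d1 d2); lra).
      assert (Hh2 : Rabs h < d2) by (pose proof (Rmin_r d1 d2); lra).
      specialize (P1 h Hh0 Hh1). specialize (P2 h Hh0 Hh2).
      eapply Rle_trans. apply Cnorm_le_sum. csimpl.
      assert (Hp : 0 < Rabs h) by (apply Rabs_pos_lt; auto).
      assert (E1 : fst (g (x + h)) + - fst (g x) + - (h * fst L) = ((fst (g (x + h)) - fst (g x)) / h - fst L) * h) by (field; auto).
      assert (E2 : snd (g (x + h)) + - snd (g x) + - (h * snd L) = ((snd (g (x + h)) - snd (g x)) / h - snd L) * h) by (field; auto).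
      rewrite E1, E2, !Rabs_mult. nra.
Qed.

Lemma dpl_val f x l l' : derivable_pt_lim f x l -> l = l' -> derivable_pt_lim f x l'.
Proof. intros; subst; auto. Qed.

Lemma RD_ext g1 g2 x L : (forall t, g1 t = g2 t) -> RD g1 x L -> RD g2 x L.
Proof.
  intros E H eps He. destruct (H eps He) as [d [Hd P]]. exists d; split; auto.
  intros h Hh. rewrite <- !E. auto.
Qed.
Lemma RD_val g x L L' : RD g x L -> L = L' -> RD g x L'.
Proof. intros; subst; auto. Qed.

Lemma RD_const c x : RD (fun _ => c) x C0.
Proof.
  apply RD_comp; simpl; split; apply (derivable_pt_lim_const (fst c)) || apply (derivable_pt_lim_const (snd c)).
Qed.

Lemma RD_line u h x : RD (fun t => Cadd u (Cscal t h)) x h.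
Proof.
  apply RD_comp; csimpl; split; apply is_derive_Reals; auto_derive; auto; ring.
Qed.

Lemma RD_add f g x Lf Lg : RD f x Lf -> RD g x Lg -> RD (fun t => Cadd (f t) (g t)) x (Cadd Lf Lg).
Proof.
  rewrite !RD_comp. intros [F1 F2] [G1 G2]. split.
  - pose proof (derivable_pt_lim_plus _ _ x _ _ F1 G1) as H. unfold plus_fct in H. exact H.
  - pose proof (derivable_pt_lim_plus _ _ x _ _ F2 G2) as H. unfold plus_fct in H. exact H.
Qed.

Lemma RD_opp f x Lf : RD f x Lf -> RD (fun t => Copp (f t)) x (Copp Lf).
Proof.
  rewrite !RD_comp. intros [F1 F2]. split.
  - pose proof (derivable_pt_lim_opp _ x _ F1) as H. unfold opp_fct in H. exact H.
  - pose proof (derivable_pt_lim_opp _ x _ F2) as H. unfold opp_fct in H. exact H.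
Qed.

Lemma RD_mul f g x Lf Lg : RD f x Lf -> RD g x Lg ->
  RD (fun t => Cmul (f t) (g t)) x (Cadd (Cmul Lf (g x)) (Cmul (f x) Lg)).
Proof.
  rewrite !RD_comp. intros [F1 F2] [G1 G2]. split.
  - pose proof (derivable_pt_lim_minus _ _ x _ _ (derivable_pt_lim_mult _ _ x _ _ F1 G1)
       (derivable_pt_lim_mult _ _ x _ _ F2 G2)) as H.
    unfold minus_fct, mult_fct in H. eapply dpl_val. exact H. csimpl. ring.
  - pose proof (derivable_pt_lim_plus _ _ x _ _ (derivable_pt_lim_mult _ _ x _ _ F1 G2)
       (derivable_pt_lim_mult _ _ x _ _ F2 G1)) as H.
    unfold plus_fct, mult_fct in H. eapply dpl_val. exact H. csimpl. ring.
Qed.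

Lemma RD_rscal (r : R -> R) f x lr Lf : derivable_pt_lim r x lr -> RD f x Lf ->
  RD (fun t => Cscal (r t) (f t)) x (Cadd (Cscal lr (f x)) (Cscal (r x) Lf)).
Proof.
  rewrite !RD_comp. intros R1 [F1 F2]. split.
  - pose proof (derivable_pt_lim_mult _ _ x _ _ R1 F1) as H.
    unfold mult_fct in H. eapply dpl_val. exact H. csimpl. ring.
  - pose proof (derivable_pt_lim_mult _ _ x _ _ R1 F2) as H.
    unfold mult_fct in H. eapply dpl_val. exact H. csimpl. ring.
Qed.

Lemma RD_Cexp f x Lf : RD f x Lf -> RD (fun t => Cexp (f t)) x (Cmul (Cexp (f x)) Lf).
Proof.
  rewrite !RD_comp. intros [F1 F2].
  assert (E1 := derivable_pt_lim_comp _ _ x _ _ F1 (derivable_pt_lim_exp (fst (f x)))).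
  assert (C1 := derivable_pt_lim_comp _ _ x _ _ F2 (derivable_pt_lim_cos (snd (f x)))).
  assert (S1 := derivable_pt_lim_comp _ _ x _ _ F2 (derivable_pt_lim_sin (snd (f x)))).
  unfold comp in *. unfold Cexp. cbn [fst snd]. split.
  - pose proof (derivable_pt_lim_mult _ _ x _ _ E1 C1) as H.
    unfold mult_fct in H. eapply dpl_val. exact H. csimpl. ring.
  - pose proof (derivable_pt_lim_mult _ _ x _ _ E1 S1) as H.
    unfold mult_fct in H. eapply dpl_val. exact H. csimpl. ring.
Qed.

Lemma RD_cont_fst g x L : RD g x L -> continuous (fun t => fst (g t)) x.
Proof.
  intro H. apply RD_comp in H. destruct H as [H _].
  apply continuity_pt_filterlim. apply derivable_continuous_pt. exists (fst L). exact H.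
Qed.
Lemma RD_cont_snd g x L : RD g x L -> continuous (fun t => snd (g t)) x.
Proof.
  intro H. apply RD_comp in H. destruct H as [_ H].
  apply continuity_pt_filterlim. apply derivable_continuous_pt. exists (snd L). exact H.
Qed.

Lemma Lip1 g g1 a b B : a <= b ->
  (forall t, a <= t <= b -> RD g t (g1 t)) ->
  (forall t, a <= t <= b -> Cnorm (g1 t) <= B) ->
  Cnorm (Csub (g b) (g a)) <= 2 * B * (b - a).
Proof.
  intros Hab HD HB. destruct (Req_dec a b) as [<-|Hne].
  - replace (Csub (g a) (g a)) with C0 by ceq. rewrite Cnorm_C0. lra.
  - assert (Hlt : a < b) by lra.
    assert (K1 : forall t, a <= t <= b -> derivable_pt_lim (fun t => fst (g t)) t (fst (g1 t)))
      by (intros t Ht; apply RD_comp; auto).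
    assert (K2 : forall t, a <= t <= b -> derivable_pt_lim (fun t => snd (g t)) t (snd (g1 t)))
      by (intros t Ht; apply RD_comp; auto).
    destruct (MVT_cor2 _ _ a b Hlt K1) as [c1 [M1 Hc1]].
    destruct (MVT_cor2 _ _ a b Hlt K2) as [c2 [M2 Hc2]].
    eapply Rle_trans. apply Cnorm_le_sum. csimpl.
    replace (fst (g b) + - fst (g a)) with (fst (g1 c1) * (b - a)) by lra.
    replace (snd (g b) + - snd (g a)) with (snd (g1 c2) * (b - a)) by lra.
    rewrite !Rabs_mult, (Rabs_right (b - a)) by lra.
    pose proof (Cnorm_fst (g1 c1)). pose proof (Cnorm_snd (g1 c2)).
    pose proof (HB c1 ltac:(lra)). pose proof (HB c2 ltac:(lra)). nra.
Qed.

Lemma Taylor2_R (f f1 f2 : R -> R) a b B : a < b ->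
  (forall t, a <= t <= b -> derivable_pt_lim f t (f1 t)) ->
  (forall t, a <= t <= b -> derivable_pt_lim f1 t (f2 t)) ->
  (forall t, a <= t <= b -> Rabs (f2 t) <= B) ->
  Rabs (f b - f a - (b - a) * f1 a) <= B * (b - a) ^ 2.
Proof.
  intros Hab D1 D2 HB.
  set (psi := fun t => f t - f a - (t - a) * f1 a).
  set (psi1 := fun t => f1 t - f1 a).
  assert (Dp : forall t, a <= t <= b -> derivable_pt_lim psi t (psi1 t)).
  { intros t Ht. unfold psi, psi1.
    pose proof (derivable_pt_lim_minus _ _ t _ _ (derivable_pt_lim_minus _ _ t _ _ (D1 t Ht) (derivable_pt_lim_const (f a) t))
       (derivable_pt_lim_mult _ _ t _ _ (derivable_pt_lim_minus _ _ t _ _ (derivable_pt_lim_id t) (derivable_pt_lim_const a t)) (derivable_pt_lim_const (f1 a) t))) as H.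
    unfold minus_fct, mult_fct, fct_cte, id in H. eapply dpl_val. exact H. ring. }
  destruct (MVT_cor2 _ _ a b Hab Dp) as [c [M Hc]].
  unfold psi in M. replace (f b - f a - (b - a) * f1 a) with (psi1 c * (b - a)) by (unfold psi in *; lra).
  unfold psi1.
  destruct (MVT_cor2 f1 f2 a c ltac:(lra) ltac:(intros; apply D2; lra)) as [d [M2 Hd]].
  rewrite M2. rewrite !Rabs_mult. rewrite (Rabs_right (c - a)), (Rabs_right (b - a)) by lra.
  pose proof (HB d ltac:(lra)). pose proof (Rabs_pos (f2 d)).
  assert (0 <= c - a <= b - a) by lra.
  apply Rle_trans with (B * (c - a) * (b - a)).
  apply Rmult_le_compat_r; [lra|]. apply Rmult_le_compat_r; lra.
  replace ((b - a)^2) with ((b-a)*(b-a)) by ring. rewrite <- Rmult_assoc.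
  apply Rmult_le_compat_r; [lra|]. apply Rmult_le_compat_l; lra.
Qed.

Lemma Taylor2 g g1 g2 a b B : a < b ->
  (forall t, a <= t <= b -> RD g t (g1 t)) ->
  (forall t, a <= t <= b -> RD g1 t (g2 t)) ->
  (forall t, a <= t <= b -> Cnorm (g2 t) <= B) ->
  Cnorm (Csub (Csub (g b) (g a)) (Cscal (b - a) (g1 a))) <= 2 * B * (b - a) ^ 2.
Proof.
  intros Hab D1 D2 HB.
  pose proof (Taylor2_R (fun t => fst (g t)) (fun t => fst (g1 t)) (fun t => fst (g2 t)) a b B Hab
    ltac:(intros t Ht; apply RD_comp; auto) ltac:(intros t Ht; apply RD_comp; auto)
    ltac:(intros t Ht; eapply Rle_trans; [apply Cnorm_fst| auto])) as T1.
  pose proof (Taylor2_R (fun t => snd (g t)) (fun t => snd (g1 t)) (fun t => snd (g2 t)) a b B Hab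
    ltac:(intros t Ht; apply RD_comp; auto) ltac:(intros t Ht; apply RD_comp; auto)
    ltac:(intros t Ht; eapply Rle_trans; [apply Cnorm_snd| auto])) as T2.
  eapply Rle_trans. apply Cnorm_le_sum. csimpl.
  replace (fst (g b) + - fst (g a) + - ((b - a) * fst (g1 a))) with (fst (g b) - fst (g a) - (b - a) * fst (g1 a)) by ring.
  replace (snd (g b) + - snd (g a) + - ((b - a) * snd (g1 a))) with (snd (g b) - snd (g a) - (b - a) * snd (g1 a)) by ring.
  lra.
Qed.

Definition line (u h : Cplx) (t : R) : Cplx := Cadd u (Cscal t h).

Definition LD (f f1 : Cplx -> Cplx) : Prop :=
  forall u h t, RD (fun t => f (line u h t)) t (Cmul (f1 (line u h t)) h).

Lemma LD_const c : LD (fun _ => c) (fun _ => C0).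
Proof. intros u h t. eapply RD_val. apply RD_const. ceq. Qed.

Lemma LD_id : LD (fun z => z) (fun _ => C1).
Proof. intros u h t. eapply RD_val. apply RD_line. ceq. Qed.

Lemma LD_add f f1 g g1 : LD f f1 -> LD g g1 ->
  LD (fun z => Cadd (f z) (g z)) (fun z => Cadd (f1 z) (g1 z)).
Proof. intros F G u h t. eapply RD_val. apply RD_add; [apply F|apply G]. ceq. Qed.

Lemma LD_mul f f1 g g1 : LD f f1 -> LD g g1 ->
  LD (fun z => Cmul (f z) (g z)) (fun z => Cadd (Cmul (f1 z) (g z)) (Cmul (f z) (g1 z))).
Proof. intros F G u h t. eapply RD_val. apply RD_mul; [apply F|apply G]. ceq. Qed.

Lemma LD_scal r f f1 : LD f f1 -> LD (fun z => Cscal r (f z)) (fun z => Cscal r (f1 z)).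
Proof.
  intros F u h t. eapply RD_val. apply (RD_rscal (fun _ => r)). apply derivable_pt_lim_const.
  apply F. ceq.
Qed.

Lemma LD_Cexp f f1 : LD f f1 -> LD (fun z => Cexp (f z)) (fun z => Cmul (Cexp (f z)) (f1 z)).
Proof. intros F u h t. eapply RD_val. apply RD_Cexp. apply F. ceq. Qed.

Lemma LD_ext f g f1 g1 : (forall z, f z = g z) -> (forall z, f1 z = g1 z) -> LD f f1 -> LD g g1.
Proof.
  intros E E1 F u h t. eapply RD_ext. intro; apply E. rewrite <- E1. apply F.
Qed.

Lemma LD_pow k : LD (fun z => Cpow z k) (fun z => Cscal (INR k) (Cpow z (k - 1))).
Proof.
  induction k.
  - eapply LD_ext; [| |apply (LD_const C1)]. reflexivity. intro; simpl; ceq.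
  - eapply LD_ext; [| |apply (LD_mul _ _ _ _ LD_id IHk)]. reflexivity.
    intro z. destruct k.
    + simpl. ceq.
    + replace (S (S k) - 1)%nat with (S k) by lia. replace (S k - 1)%nat with k by lia. cbn [Cpow]. rewrite (S_INR (S k)).
      set (P := Cpow z k). clearbody P. ceq.
Qed.

Definition Mon (k : nat) (A B : R) (z : Cplx) : Cplx :=
  Cmul (Cpow z k) (Cexp (Cadd (Cscal A (Cmul z z)) (Cscal B z))).

Definition dMon (k : nat) (A B : R) (z : Cplx) : Cplx :=
  Cadd (Cadd (Cscal (INR k) (Mon (k - 1) A B z)) (Cscal (2 * A) (Mon (S k) A B z)))
       (Cscal B (Mon k A B z)).

Lemma LD_Mon k A B : LD (Mon k A B) (dMon k A B).
Proof.
  assert (Hphi : LD (fun z => Cadd (Cscal A (Cmul z z)) (Cscal B z))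
                    (fun z => Cadd (Cscal A (Cadd (Cmul C1 z) (Cmul z C1))) (Cscal B C1))).
  { apply LD_add. apply LD_scal. apply LD_mul; apply LD_id. apply LD_scal. apply LD_id. }
  eapply LD_ext; [| | apply (LD_mul _ _ _ _ (LD_pow k) (LD_Cexp _ _ Hphi))].
  reflexivity.
  intro z. unfold dMon, Mon. simpl Cpow.
  set (E := Cexp (Cadd (Cscal A (Cmul z z)) (Cscal B z))). clearbody E.
  destruct k.
  - simpl. ceq.
  - replace (S k - 1)%nat with k by lia. simpl Cpow. set (P := Cpow z k). clearbody P. ceq.
Qed.

Definition CD (f : Cplx -> Cplx) (z L : Cplx) : Prop :=
  forall eps, 0 < eps -> exists delta, 0 < delta /\
       forall h : Cplx, Cnorm h < delta ->
         Cnorm (Csub (Csub (f (Cadd z h)) (f z)) (Cmul L h)) <= eps * Cnorm h.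

Lemma CD_unique f z L1 L2 : CD f z L1 -> CD f z L2 -> L1 = L2.
Proof.
  intros H1 H2.
  assert (Hn : Cnorm (Csub L1 L2) = 0).
  { apply Rle_antisym; [| apply Cnorm_ge0].
    apply Rnot_lt_le. intro Hp.
    set (e := Cnorm (Csub L1 L2) / 4).
    assert (He : 0 < e) by (unfold e; lra).
    destruct (H1 e He) as [d1 [Hd1 P1]]. destruct (H2 e He) as [d2 [Hd2 P2]].
    set (hh := Rmin d1 d2 / 2).
    assert (Hh : 0 < hh) by (unfold hh; apply Rmin_case; lra).
    set (h := (hh, 0)).
    assert (Hnh : Cnorm h = hh) by (unfold h; rewrite Cnorm_pair0; apply Rabs_right; lra).
    assert (Hh1 : Cnorm h < d1) by (rewrite Hnh; unfold hh; pose proof (Rmin_l d1 d2); lra).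
    assert (Hh2 : Cnorm h < d2) by (rewrite Hnh; unfold hh; pose proof (Rmin_r d1 d2); lra).
    specialize (P1 h Hh1). specialize (P2 h Hh2).
    assert (E : Cmul (Csub L1 L2) h =
      Csub (Csub (Csub (f (Cadd z h)) (f z)) (Cmul L2 h)) (Csub (Csub (f (Cadd z h)) (f z)) (Cmul L1 h))) by ceq.
    pose proof (Cnorm_sub_tri (Csub (Csub (f (Cadd z h)) (f z)) (Cmul L2 h)) (Csub (Csub (f (Cadd z h)) (f z)) (Cmul L1 h))).
    rewrite <- E in H. rewrite Cnorm_mul in H. rewrite Hnh in *.
    unfold e in *. nra. }
  apply Cnorm_eq0 in Hn. unfold C0 in Hn. destruct L1, L2; csimpl.
  inversion Hn. f_equal; lra.
Qed.

Lemma CD_Cderiv f z L : CD f z L -> Cderiv f z = L.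
Proof.
  intro H. unfold Cderiv.
  apply (CD_unique f z); auto.
  unfold CD. apply (epsilon_spec (inhabits (0,0)) (fun L0 => forall eps, 0 < eps -> exists delta, 0 < delta /\
       forall h : Cplx, Cnorm h < delta ->
         Cnorm (Csub (Csub (f (Cadd z h)) (f z)) (Cmul L0 h)) <= eps * Cnorm h)).
  exists L. exact H.
Qed.

Lemma line0 u h : line u h 0 = u.
Proof. unfold line. ceq. Qed.
Lemma line1 u h : line u h 1 = Cadd u h.
Proof. unfold line. ceq. Qed.

Lemma LD_taylor f f1 f2 z h B : LD f f1 -> LD f1 f2 ->
  (forall t, 0 <= t <= 1 -> Cnorm (f2 (line z h t)) <= B) ->
  Cnorm (Csub (Csub (f (Cadd z h)) (f z)) (Cmul (f1 z) h)) <= 2 * B * Cnorm h ^ 2.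
Proof.
  intros F1 F2 HB.
  pose proof (Taylor2 (fun t => f (line z h t)) (fun t => Cmul (f1 (line z h t)) h)
     (fun t => Cmul (Cmul (f2 (line z h t)) h) h) 0 1 (B * Cnorm h ^ 2) Rlt_0_1) as T.
  cbv beta in T. rewrite line0, line1 in T.
  replace (Cmul (f1 z) h) with (Cscal (1 - 0) (Cmul (f1 z) h)) by ceq.
  replace (2 * B * Cnorm h ^ 2) with (2 * (B * Cnorm h ^ 2) * (1 - 0) ^ 2) by ring.
  apply T.
  - intros; apply F1.
  - intros t _. eapply RD_val. apply RD_mul. apply F2. apply RD_const. ceq.
  - intros t Ht. rewrite !Cnorm_mul. specialize (HB t Ht). pose proof (Cnorm_ge0 h).
    replace (Cnorm h ^ 2) with (Cnorm h * Cnorm h) by ring.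
    rewrite Rmult_assoc. apply Rmult_le_compat_r; auto. nra.
Qed.

Lemma LD_CD f f1 f2 z : LD f f1 -> LD f1 f2 ->
  (exists B, forall w, Cnorm (Csub w z) <= 1 -> Cnorm (f2 w) <= B) ->
  CD f z (f1 z).
Proof.
  intros F1 F2 [B HB] eps Heps.
  set (B' := Rabs B + 1).
  exists (Rmin 1 (eps / (2 * B'))). split.
  { apply Rmin_case; [lra|]. unfold B'. pose proof (Rabs_pos B). apply Rdiv_lt_0_compat; lra. }
  intros h Hh.
  assert (Hh1 : Cnorm h <= 1) by (pose proof (Rmin_l 1 (eps / (2 * B'))); lra).
  assert (Hh2 : Cnorm h <= eps / (2 * B')) by (pose proof (Rmin_r 1 (eps / (2 * B'))); lra).
  eapply Rle_trans. apply (LD_taylor f f1 f2 z h B'); auto.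
  - intros t Ht. eapply Rle_trans. apply HB.
    + replace (Csub (line z h t) z) with (Cscal t h) by (unfold line; ceq).
      rewrite Cnorm_scal, Rabs_right by lra. pose proof (Cnorm_ge0 h). nra.
    + unfold B'. pose proof (Rle_abs B). lra.
  - assert (0 < B') by (unfold B'; pose proof (Rabs_pos B); lra).
    pose proof (Cnorm_ge0 h).
    assert (2 * B' * Cnorm h <= eps).
    { apply (Rmult_le_compat_l (2*B')) in Hh2; [|lra].
      replace (2 * B' * (eps / (2 * B'))) with eps in Hh2 by (field; lra). lra. }
    replace (2 * B' * Cnorm h ^ 2) with ((2 * B' * Cnorm h) * Cnorm h) by ring.
    apply Rmult_le_compat_r; auto.
Qed.

Lemma exp_le x y : x <= y -> exp x <= exp y.
Proof. intro H. destruct (Req_dec x y) as [->|]; [lra|]. left; apply exp_increasing; lra. Qed.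

Lemma exp_pow x n : exp x ^ n = exp (INR n * x).
Proof.
  induction n. simpl. rewrite Rmult_0_l, exp_0. ring.
  rewrite S_INR. simpl. rewrite IHn. rewrite <- exp_plus. f_equal. ring.
Qed.

Lemma pow_le_exp N v : 0 <= v -> v ^ N <= INR N ^ N * exp v.
Proof.
  intro Hv. destruct N.
  - simpl. pose proof (exp_ineq1_le v). lra.
  - set (n := INR (S N)). assert (Hn : 0 < n) by (unfold n; apply lt_0_INR; lia).
    assert (H1 : v / n <= exp (v / n)) by (pose proof (exp_ineq1_le (v/n)); lra).
    assert (H2 : (v / n) ^ (S N) <= exp (v / n) ^ (S N)).
    { apply pow_incr. split; auto. apply Rdiv_le_0_compat; lra. }
    rewrite exp_pow in H2. fold n in H2. replace (n * (v / n)) with v in H2 by (field; lra).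
    replace (v ^ S N) with (n ^ S N * (v / n) ^ S N).
    apply Rmult_le_compat_l; auto. apply pow_le; lra.
    rewrite <- Rpow_mult_distr. f_equal. field. lra.
Qed.

Lemma gauss_dom0 N A c : 0 < c -> exists C, 0 < C /\ forall y, 0 <= y ->
  (1 + y) ^ N * exp (A * y - c * y ^ 2) <= C.
Proof.
  intro Hc.
  set (K := 2 ^ N * (INR N / (c/2)) ^ N * exp (c/2) * exp (A^2 / (2*c))).
  exists (K + 1). split.
  { assert (0 <= K). { unfold K. repeat apply Rmult_le_pos; try apply pow_le; try (left; apply exp_pos); try lra.
      apply Rdiv_le_0_compat. apply pos_INR. lra. } lra. }
  intros y Hy.
  set (v := 1 + y ^ 2).
  assert (E1 : (1 + y) ^ N <= 2 ^ N * v ^ N).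
  { rewrite <- Rpow_mult_distr. apply pow_incr. split. lra. unfold v.
    assert (1 + y <= (1 + y) ^ 2) by nra. nra. }
  assert (E2 : exp (A * y - c * y ^ 2) <= exp (A^2/(2*c)) * (exp (c/2) * exp (- (c/2) * v))).
  { rewrite <- !exp_plus. apply exp_le. unfold v.
    assert (A * y <= c/2 * y^2 + A^2/(2*c)).
    { assert (0 <= (c*y - A)^2) by apply pow2_ge_0.
      apply (Rmult_le_reg_l (2*c)). lra.
      replace (2 * c * (c / 2 * y ^ 2 + A ^ 2 / (2 * c))) with (c^2*y^2 + A^2) by (field; lra). nra. }
    nra. }
  assert (E3 : v ^ N * exp (- (c/2) * v) <= (INR N / (c/2)) ^ N).
  { pose proof (pow_le_exp N (c/2 * v) ltac:(unfold v; nra)) as P.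
    rewrite Rpow_mult_distr in P.
    assert (0 < (c/2)^N) by (apply pow_lt; lra).
    assert (v ^ N <= (INR N / (c / 2)) ^ N * exp (c/2 * v)).
    { assert (Q : (INR N / (c / 2)) ^ N = INR N ^ N * / (c/2)^N).
      { unfold Rdiv. rewrite Rpow_mult_distr, pow_inv. reflexivity. }
      rewrite Q. replace (v ^ N) with (((c/2)^N * v^N) * / (c/2)^N) by (field; lra).
      replace (INR N ^ N * / (c / 2) ^ N * exp (c / 2 * v)) with ((INR N ^ N * exp (c / 2 * v)) * / (c/2)^N) by ring.
      apply Rmult_le_compat_r; auto. left; apply Rinv_0_lt_compat; auto. }
    replace (- (c / 2) * v) with (- (c/2 * v)) by ring. rewrite exp_Ropp.
    apply (Rmult_le_reg_r (exp (c/2 * v))). apply exp_pos.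
    rewrite Rmult_assoc, Rinv_l by (apply Rgt_not_eq, exp_pos). lra. }
  assert (0 <= v ^ N) by (apply pow_le; unfold v; nra).
  assert (0 <= (1 + y) ^ N) by (apply pow_le; lra).
  pose proof (exp_pos (A * y - c * y ^ 2)). pose proof (exp_pos (- (c/2) * v)).
  pose proof (exp_pos (c/2)). pose proof (exp_pos (A^2/(2*c))).
  assert ((1 + y) ^ N * exp (A * y - c * y ^ 2) <= 2 ^ N * v ^ N * (exp (A^2/(2*c)) * (exp (c/2) * exp (- (c/2) * v)))).
  { apply Rmult_le_compat; auto. lra. }
  assert (2 ^ N * v ^ N * (exp (A^2/(2*c)) * (exp (c/2) * exp (- (c/2) * v))) <= K).
  { unfold K. replace (2 ^ N * v ^ N * (exp (A ^ 2 / (2 * c)) * (exp (c / 2) * exp (- (c / 2) * v))))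
      with (2 ^ N * (v ^ N * exp (- (c / 2) * v)) * exp (c/2) * exp (A^2/(2*c))) by ring.
    repeat apply Rmult_le_compat_r; try lra. apply Rmult_le_compat_l. apply pow_le; lra. auto. }
  lra.
Qed.

Lemma gauss_dom N A c : 0 < c -> exists C, 0 < C /\ forall X,
  (1 + Rabs X) ^ N * exp (A * Rabs X - c * X ^ 2) <= C / (1 + X ^ 2).
Proof.
  intro Hc. destruct (gauss_dom0 (N + 2) A c Hc) as [C [HC P]].
  exists C; split; auto. intro X.
  specialize (P (Rabs X) (Rabs_pos X)). rewrite pow2_abs in P.
  assert (H1 : 0 < 1 + X^2) by nra.
  apply (Rmult_le_reg_r (1 + X^2)); auto.
  unfold Rdiv. rewrite (Rmult_assoc C), Rinv_l by lra. rewrite Rmult_1_r.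
  eapply Rle_trans; [|apply P]. rewrite pow_add.
  assert (1 + X^2 <= (1 + Rabs X)^2). { rewrite <- (pow2_abs X). pose proof (Rabs_pos X). nra. }
  pose proof (exp_pos (A * Rabs X - c * X ^ 2)).
  assert (0 <= (1 + Rabs X)^N) by (apply pow_le; pose proof (Rabs_pos X); lra).
  replace ((1 + Rabs X) ^ N * (1 + Rabs X) ^ 2 * exp (A * Rabs X - c * X ^ 2)) with
     ((1 + Rabs X) ^ N * exp (A * Rabs X - c * X ^ 2) * (1 + Rabs X) ^ 2) by ring.
  apply Rmult_le_compat_l; auto. apply Rmult_le_pos; lra.
Qed.

Lemma Cnorm_Mon k A B u : Cnorm (Mon k A B u) =
  Cnorm u ^ k * exp (A * (fst u ^ 2 - snd u ^ 2) + B * fst u).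
Proof.
  unfold Mon. rewrite Cnorm_mul, Cnorm_pow, Cnorm_Cexp. f_equal. f_equal.
  destruct u; csimpl. ring.
Qed.

Lemma Cnorm_le_abs u : Cnorm u <= Rabs (fst u) + Rabs (snd u).
Proof. apply Cnorm_le_sum. Qed.

Fixpoint sumC {A} (F : A -> Cplx) (L : list A) : Cplx :=
  match L with nil => C0 | x :: L' => Cadd (F x) (sumC F L') end.
Fixpoint sumR {A} (F : A -> R) (L : list A) : R :=
  match L with nil => 0 | x :: L' => F x + sumR F L' end.

Lemma sumC_app {A} (F : A -> Cplx) l1 l2 : sumC F (l1 ++ l2) = Cadd (sumC F l1) (sumC F l2).
Proof. induction l1; simpl. generalize (sumC F l2); intro; ceq. rewrite IHl1. generalize (sumC F l1) (sumC F l2) (F a); intros; ceq. Qed.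

Lemma sumC_norm {A} (F : A -> Cplx) (B : A -> R) L :
  (forall x, In x L -> Cnorm (F x) <= B x) -> Cnorm (sumC F L) <= sumR B L.
Proof.
  induction L; simpl; intro H. rewrite Cnorm_C0; lra.
  eapply Rle_trans. apply Cnorm_tri. apply Rplus_le_compat; auto.
Qed.

Lemma sumR_nonneg {A} (B : A -> R) L : (forall x, 0 <= B x) -> 0 <= sumR B L.
Proof. intro H; induction L; simpl. lra. pose proof (H a). lra. Qed.

Lemma sumR_scal {A} (B : A -> R) L r : sumR (fun x => r * B x) L = r * sumR B L.
Proof. induction L; simpl. ring. rewrite IHL. ring. Qed.

Lemma sumC_norm_fac {A} (F : A -> Cplx) (D : A -> R) G L :
  (forall x, In x L -> Cnorm (F x) <= D x * G) -> Cnorm (sumC F L) <= sumR D L * G.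
Proof.
  intro H. eapply Rle_trans. apply (sumC_norm F (fun x => D x * G)). auto.
  clear H. induction L; simpl. lra. lra.
Qed.

Lemma sumC_ext {A} (F G : A -> Cplx) L : (forall x, F x = G x) -> sumC F L = sumC G L.
Proof. intro H; induction L; simpl; auto. rewrite H, IHL; auto. Qed.

Definition cs (s : R) : R := / sqrt (4 * PI * s).

Definition kmon (a : R) (m : R * nat * nat) (s : R) (u : Cplx) : Cplx :=
  let '(r, n, k) := m in Cscal (r * / s ^ n * cs s) (Mon k (- / (4 * s)) a u).
Definition evalk a L s u := sumC (fun m => kmon a m s u) L.
Definition dk (a : R) (m : R * nat * nat) : list (R * nat * nat) :=
  let '(r, n, k) := m in
  match k with
  | O => (- r / 2, S n, 1%nat) :: (r * a, n, 0%nat) :: nil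
  | S k' => (r * INR (S k'), n, k') :: (- r / 2, S n, S (S k')) :: (r * a, n, S k') :: nil
  end.
Definition dkL a L := flat_map (dk a) L.
Definition kterms a n := Nat.iter n (dkL a) ((1, 0%nat, 0%nat) :: nil).

Definition gmon (a : R) (m : R * nat * nat) (t xi : R) : Cplx :=
  let '(c, j, k) := m in Cscal (c * t ^ j) (Mon k (- t) 0 (xi, a)).
Definition gq (m : R * nat * nat) (t : R) (q : Cplx) : Cplx :=
  let '(c, j, k) := m in Cscal (c * t ^ j) (Mon k (- t) 0 q).
Definition evalg a L t xi := sumC (fun m => gmon a m t xi) L.
Definition evalgq L t q := sumC (fun m => gq m t q) L.
Definition dg (m : R * nat * nat) : list (R * nat * nat) :=
  let '(c, j, k) := m in
  match k with
  | O => (-2 * c, S j, 1%nat) :: nil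
  | S k' => (c * INR (S k'), j, k') :: (-2 * c, S j, S (S k')) :: nil
  end.
Definition dgL L := flat_map dg L.
Definition gterms n := Nat.iter n dgL ((1, 0%nat, 2%nat) :: nil).

Lemma LD_sum {A} (F F1 : A -> Cplx -> Cplx) L :
  (forall x, LD (F x) (F1 x)) -> LD (fun z => sumC (fun m => F m z) L) (fun z => sumC (fun m => F1 m z) L).
Proof.
  intro H. induction L; simpl.
  - apply LD_const.
  - apply LD_add; auto.
Qed.

Lemma LD_kmon a m s : s <> 0 -> LD (kmon a m s) (evalk a (dk a m) s).
Proof.
  intro Hs. destruct m as [[r n] k].
  eapply LD_ext; [| | apply LD_scal; apply LD_Mon]. reflexivity.
  intro u. unfold evalk, dk, dMon. destruct k as [|k].
  - simpl sumC. unfold kmon.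
    generalize (Mon (0 - 1) (- / (4 * s)) a u) (Mon 1 (- / (4 * s)) a u) (Mon 0 (- / (4 * s)) a u).
    intros M0 M1 M2. destruct M0, M1, M2. csimpl. simpl pow. simpl INR.
    f_equal; field; repeat split; try apply pow_nonzero; auto.
  - rewrite !S_INR. simpl sumC. unfold kmon. replace (S k - 1)%nat with k by lia.
    generalize (Mon k (- / (4 * s)) a u) (Mon (S (S k)) (- / (4 * s)) a u) (Mon (S k) (- / (4 * s)) a u).
    intros M0 M1 M2. destruct M0, M1, M2. csimpl. simpl pow.
    f_equal; field; repeat split; try apply pow_nonzero; auto.
Qed.

Lemma sumC_flat_map {A B} (F : B -> Cplx) (g : A -> list B) L :
  sumC F (flat_map g L) = sumC (fun m => sumC F (g m)) L.
Proof. induction L; simpl; auto. rewrite sumC_app, IHL. reflexivity. Qed.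

Lemma LD_evalk a L s : s <> 0 -> LD (evalk a L s) (evalk a (dkL a L) s).
Proof.
  intro Hs. unfold evalk, dkL.
  eapply LD_ext; [intro; reflexivity| intro; symmetry; apply sumC_flat_map|].
  apply (LD_sum (fun m z => kmon a m s z) (fun m z => sumC (fun m0 => kmon a m0 s z) (dk a m))).
  intro m. apply LD_kmon; auto.
Qed.

Lemma LD_evalk_iter a n s : s <> 0 -> LD (evalk a (kterms a n) s) (evalk a (kterms a (S n)) s).
Proof. intro Hs. unfold kterms. simpl Nat.iter. apply LD_evalk; auto. Qed.

Lemma LD_gq m t : LD (gq m t) (evalgq (dg m) t).
Proof.
  destruct m as [[c j] k].
  eapply LD_ext; [| | apply LD_scal; apply LD_Mon]. reflexivity.
  intro u. unfold evalgq, dg, dMon. destruct k as [|k].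
  - simpl sumC. unfold gq.
    generalize (Mon (0 - 1) (- t) 0 u) (Mon 1 (- t) 0 u) (Mon 0 (- t) 0 u).
    intros M0 M1 M2. destruct M0, M1, M2. csimpl. simpl pow. simpl INR.
    f_equal; ring.
  - rewrite !S_INR. simpl sumC. unfold gq. replace (S k - 1)%nat with k by lia.
    generalize (Mon k (- t) 0 u) (Mon (S (S k)) (- t) 0 u) (Mon (S k) (- t) 0 u).
    intros M0 M1 M2. destruct M0, M1, M2. csimpl. simpl pow.
    f_equal; ring.
Qed.

Lemma LD_evalgq L t : LD (evalgq L t) (evalgq (dgL L) t).
Proof.
  unfold evalgq, dgL.
  eapply LD_ext; [intro; reflexivity| intro; symmetry; apply sumC_flat_map|].
  apply (LD_sum (fun m z => gq m t z) (fun m z => sumC (fun m0 => gq m0 t z) (dg m))).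
  intro m. apply LD_gq.
Qed.

Lemma evalg_q a L t xi : evalg a L t xi = evalgq L t (xi, a).
Proof. unfold evalg, evalgq. apply sumC_ext. intros [[c j] k]. reflexivity. Qed.

Lemma RD_evalg a L t xi : RD (fun x => evalg a L t x) xi (evalg a (dgL L) t xi).
Proof.
  assert (E : forall x, line (0, a) C1 x = (x, a)) by (intro; unfold line; ceq).
  apply (RD_ext (fun x => evalgq L t (line (0,a) C1 x))). intro x. rewrite E, evalg_q. reflexivity.
  eapply RD_val. apply (LD_evalgq L t (0, a) C1 xi).
  rewrite E, evalg_q. generalize (evalgq (dgL L) t (xi, a)); intro; ceq.
Qed.

Definition ginv (beta : nat) (m : R * nat * nat) : Prop :=
  let '(c, j, k) := m in (k + beta = 2 + 2 * j)%nat.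

Lemma gterms_inv beta : forall m, In m (gterms beta) -> ginv beta m.
Proof.
  induction beta; intros m Hm.
  - simpl in Hm. destruct Hm as [<-|[]]. simpl. lia.
  - unfold gterms in Hm. simpl Nat.iter in Hm. fold (gterms beta) in Hm.
    unfold dgL in Hm. apply in_flat_map in Hm. destruct Hm as [m0 [H0 H1]].
    specialize (IHbeta m0 H0). destruct m0 as [[c j] k]. simpl in IHbeta.
    destruct k as [|k]; simpl in H1.
    + destruct H1 as [<-|[]]. simpl. lia.
    + destruct H1 as [<-|[<-|[]]]; simpl; lia.
Qed.

Lemma cnorm_strip u b : 0 <= b -> Rabs (snd u) <= b -> Cnorm u <= (1 + b) * (1 + Rabs (fst u)).
Proof.
  intros Hb Hu. eapply Rle_trans. apply Cnorm_le_sum. pose proof (Rabs_pos (fst u)). nra.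
Qed.

Lemma cs_pos s : 0 < s -> 0 < cs s.
Proof. intro. unfold cs. apply Rinv_0_lt_compat, sqrt_lt_R0. pose proof PI_RGT_0. nra. Qed.

Lemma cs_le s t0 : 0 < t0 -> t0 <= s -> cs s <= cs t0.
Proof.
  intros. unfold cs. apply Rinv_le_contravar. apply sqrt_lt_R0. pose proof PI_RGT_0. nra.
  apply sqrt_le_1_alt. pose proof PI_RGT_0. nra.
Qed.

Lemma kmon_bound a t0 t1 b m : 0 < t0 -> t0 <= t1 -> 0 <= b ->
  exists C, 0 < C /\ forall s u, t0 <= s <= t1 -> Rabs (snd u) <= b ->
    Cnorm (kmon a m s u) <= C / (1 + fst u ^ 2).
Proof.
  intros H0 H1 Hb. destruct m as [[r n] k].
  destruct (gauss_dom k (Rabs a) (/ (4 * t1)) ltac:(apply Rinv_0_lt_compat; lra)) as [Cg [HCg PG]].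
  set (C := Rabs r * / t0 ^ n * cs t0 * (1 + b) ^ k * exp (b ^ 2 / (4 * t0)) * Cg).
  exists (C + 1). split.
  { assert (0 <= C). unfold C. pose proof (cs_pos t0 H0). pose proof (exp_pos (b ^ 2 / (4 * t0))).
    pose proof (Rabs_pos r). assert (0 < / t0 ^n) by (apply Rinv_0_lt_compat, pow_lt; lra).
    assert (0 <= (1+b)^k) by (apply pow_le; lra).
    repeat apply Rmult_le_pos; lra. lra. }
  intros s u Hs Hu. unfold kmon. rewrite Cnorm_scal, Cnorm_Mon.
  set (X := fst u). set (Y := snd u). fold Y in Hu.
  assert (Hspos : 0 < s) by lra.
  assert (Hcoef : Rabs (r * / s ^ n * cs s) <= Rabs r * / t0 ^ n * cs t0).
  { rewrite !Rabs_mult. rewrite (Rabs_right (cs s)) by (left; apply cs_pos; lra).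
    rewrite (Rabs_right (/ s ^ n)) by (left; apply Rinv_0_lt_compat, pow_lt; lra).
    apply Rmult_le_compat. apply Rmult_le_pos; [apply Rabs_pos| left; apply Rinv_0_lt_compat, pow_lt; lra].
    left; apply cs_pos; lra.
    apply Rmult_le_compat_l. apply Rabs_pos. apply Rinv_le_contravar. apply pow_lt; lra. apply pow_incr; lra.
    apply cs_le; lra. }
  assert (Hu2 : Cnorm u ^ k <= (1 + b) ^ k * (1 + Rabs X) ^ k).
  { rewrite <- Rpow_mult_distr. apply pow_incr. split. apply Cnorm_ge0. apply cnorm_strip; auto. }
  assert (Hex : exp (- / (4 * s) * (X ^ 2 - Y ^ 2) + a * X) <=
                exp (b ^ 2 / (4 * t0)) * exp (Rabs a * Rabs X - / (4 * t1) * X ^ 2)).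
  { rewrite <- exp_plus. apply exp_le.
    assert (Y ^ 2 <= b ^ 2) by (rewrite <- (pow2_abs Y); pose proof (Rabs_pos Y); nra).
    assert (/ (4 * s) <= / (4 * t0)) by (apply Rinv_le_contravar; lra).
    assert (/ (4 * t1) <= / (4 * s)) by (apply Rinv_le_contravar; lra).
    assert (0 < / (4 * s)) by (apply Rinv_0_lt_compat; lra).
    assert (a * X <= Rabs a * Rabs X) by (rewrite <- Rabs_mult; apply Rle_abs).
    assert (0 <= X^2) by nra. assert (0 <= Y^2) by nra.
    unfold Rdiv. nra. }
  specialize (PG X).
  assert (0 <= Cnorm u ^ k) by (apply pow_le, Cnorm_ge0).
  assert (0 < 1 + X^2) by nra.
  assert (0 <= (1 + b) ^ k) by (apply pow_le; lra).
  assert (0 <= (1 + Rabs X) ^ k) by (apply pow_le; pose proof (Rabs_pos X); lra).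
  pose proof (exp_pos (- / (4 * s) * (X ^ 2 - Y ^ 2) + a * X)).
  pose proof (exp_pos (b ^ 2 / (4 * t0))).
  pose proof (exp_pos (Rabs a * Rabs X - / (4 * t1) * X ^ 2)).
  apply Rle_trans with (Rabs r * / t0 ^ n * cs t0 * ((1 + b) ^ k * (1 + Rabs X) ^ k) *
     (exp (b ^ 2 / (4 * t0)) * exp (Rabs a * Rabs X - / (4 * t1) * X ^ 2))).
  { rewrite <- Rmult_assoc. apply Rmult_le_compat; try apply Rmult_le_pos; try apply Rabs_pos; try lra.
    apply Rmult_le_compat; try apply Rabs_pos; auto. }
  apply Rle_trans with (C / (1 + X ^ 2)).
  { set (Kc := Rabs r * / t0 ^ n * cs t0 * (1 + b) ^ k * exp (b ^ 2 / (4 * t0))).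
    replace (C / (1 + X ^ 2)) with (Kc * (Cg / (1 + X ^ 2))) by (unfold C, Kc, Rdiv; ring).
    replace (Rabs r * / t0 ^ n * cs t0 * ((1 + b) ^ k * (1 + Rabs X) ^ k) *
      (exp (b ^ 2 / (4 * t0)) * exp (Rabs a * Rabs X - / (4 * t1) * X ^ 2))) with
      (Kc * ((1 + Rabs X) ^ k * exp (Rabs a * Rabs X - / (4 * t1) * X ^ 2))) by (unfold Kc; ring).
    apply Rmult_le_compat_l; auto.
    unfold Kc. assert (0 < / t0 ^n) by (apply Rinv_0_lt_compat, pow_lt; lra).
    pose proof (cs_pos t0 H0). pose proof (Rabs_pos r). repeat apply Rmult_le_pos; lra. }
  unfold Rdiv. apply Rmult_le_compat_r. left; apply Rinv_0_lt_compat; lra. lra.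
Qed.

Lemma evalk_bound a t0 t1 b L : 0 < t0 -> t0 <= t1 -> 0 <= b ->
  exists C, 0 < C /\ forall s u, t0 <= s <= t1 -> Rabs (snd u) <= b ->
    Cnorm (evalk a L s u) <= C / (1 + fst u ^ 2).
Proof.
  intros H0 H1 Hb. induction L as [|m L IH].
  - exists 1. split. lra. intros s u _ _. unfold evalk. simpl. rewrite Cnorm_C0.
    apply Rdiv_le_0_compat; nra.
  - destruct IH as [C2 [HC2 P2]]. destruct (kmon_bound a t0 t1 b m H0 H1 Hb) as [C1 [HC1 P1]].
    exists (C1 + C2). split. lra. intros s u Hs Hu. unfold evalk. cbn [sumC].
    eapply Rle_trans. apply Cnorm_tri. specialize (P1 s u Hs Hu). specialize (P2 s u Hs Hu).
    unfold evalk in P2. unfold Rdiv in *. rewrite Rmult_plus_distr_r. lra.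
Qed.

Lemma gmon_local a T m Rr : 0 <= T -> 0 <= Rr -> exists B, 0 < B /\
  forall t xi, 0 <= t <= T -> Rabs xi <= Rr -> Cnorm (gmon a m t xi) <= B.
Proof.
  intros HT HR. destruct m as [[c j] k].
  exists (Rabs c * T ^ j * (Rr + Rabs a) ^ k * exp (T * a ^ 2) + 1). split.
  { assert (0 <= Rabs c * T ^ j * (Rr + Rabs a) ^ k * exp (T * a ^ 2)).
    { pose proof (Rabs_pos c). pose proof (Rabs_pos a). pose proof (exp_pos (T * a^2)).
      assert (0 <= T^j) by (apply pow_le; lra). assert (0 <= (Rr + Rabs a)^k) by (apply pow_le; lra).
      repeat apply Rmult_le_pos; lra. } lra. }
  intros t xi Ht Hx. unfold gmon. rewrite Cnorm_scal, Cnorm_Mon. cbn [fst snd].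
  assert (A1 : Rabs (c * t ^ j) <= Rabs c * T ^ j).
  { rewrite Rabs_mult. apply Rmult_le_compat_l. apply Rabs_pos. rewrite Rabs_right.
    apply pow_incr; lra. apply Rle_ge, pow_le; lra. }
  assert (A2 : Cnorm (xi, a) ^ k <= (Rr + Rabs a) ^ k).
  { apply pow_incr. split. apply Cnorm_ge0. eapply Rle_trans. apply Cnorm_le_sum. simpl. lra. }
  assert (A3 : exp (- t * (xi ^ 2 - a ^ 2) + 0 * xi) <= exp (T * a ^ 2)).
  { apply exp_le. assert (0 <= xi^2) by nra. assert (0 <= a^2) by nra.
    assert (0 <= t * xi^2) by (apply Rmult_le_pos; lra). assert (t*a^2 <= T*a^2) by (apply Rmult_le_compat_r; lra). lra. }
  assert (0 <= Cnorm (xi, a) ^ k) by (apply pow_le, Cnorm_ge0).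
  pose proof (exp_pos (- t * (xi ^ 2 - a ^ 2) + 0 * xi)).
  assert (Rabs (c * t ^ j) * (Cnorm (xi, a) ^ k * exp (- t * (xi ^ 2 - a ^ 2) + 0 * xi)) <=
          Rabs c * T ^ j * ((Rr + Rabs a) ^ k * exp (T * a ^ 2))).
  { apply Rmult_le_compat; auto. apply Rabs_pos. apply Rmult_le_pos; lra.
    apply Rmult_le_compat; lra. }
  lra.
Qed.

Lemma evalg_local a T L Rr : 0 <= T -> 0 <= Rr -> exists B, 0 < B /\
  forall t xi, 0 <= t <= T -> Rabs xi <= Rr -> Cnorm (evalg a L t xi) <= B.
Proof.
  intros HT HR. induction L as [|m L IH].
  - exists 1. split. lra. intros. unfold evalg. simpl. rewrite Cnorm_C0. lra.
  - destruct IH as [B2 [HB2 P2]]. destruct (gmon_local a T m Rr HT HR) as [B1 [HB1 P1]].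
    exists (B1 + B2). split. lra. intros t xi Ht Hx. unfold evalg. cbn [sumC].
    eapply Rle_trans. apply Cnorm_tri. specialize (P1 t xi Ht Hx). specialize (P2 t xi Ht Hx).
    unfold evalg in P2. lra.
Qed.

Definition gdec (beta : nat) (t xi : R) : R := / japan xi ^ beta * (1 + xi ^ 2 * exp (- (t * xi ^ 2) / 2)).

Lemma japan_pos xi : 0 < japan xi.
Proof. unfold japan. apply sqrt_lt_R0. nra. Qed.

Lemma gdec_pos beta t xi : 0 < gdec beta t xi.
Proof.
  unfold gdec. apply Rmult_lt_0_compat. apply Rinv_0_lt_compat, pow_lt, japan_pos.
  pose proof (exp_pos (- (t * xi ^ 2) / 2)). nra.
Qed.

Lemma gmon_decay a T beta m : 0 <= T -> ginv beta m -> exists D, 0 < D /\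
  forall t xi, 0 <= t <= T -> Cnorm (gmon a m t xi) <= D * gdec beta t xi.
Proof.
  intros HT Hinv. destruct m as [[c j] k]. simpl in Hinv.
  set (D := Rabs c * (1 + Rabs a) ^ k * exp (T * a ^ 2) * 2 ^ beta * (T ^ j + 2 ^ j * INR j ^ j) + 1).
  assert (HD0 : 0 <= D - 1).
  { pose proof (Rabs_pos c). pose proof (Rabs_pos a). pose proof (exp_pos (T * a^2)).
    assert (0 <= T^j) by (apply pow_le; lra). assert (0 <= (1 + Rabs a)^k) by (apply pow_le; lra).
    assert (0 <= 2^beta) by (apply pow_le; lra). assert (0 <= 2^j * INR j ^ j) by (apply Rmult_le_pos; apply pow_le; try lra; apply pos_INR).
    assert (0 <= T^j + 2^j * INR j ^ j) by lra.
    assert (0 <= Rabs c * (1 + Rabs a) ^ k * exp (T * a ^ 2) * 2 ^ beta * (T ^ j + 2 ^ j * INR j ^ j)) by (repeat apply Rmult_le_pos; lra).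
    unfold D. lra. }
  exists D. split. lra.
  intros t xi Ht. unfold gmon. rewrite Cnorm_scal, Cnorm_Mon. cbn [fst snd].
  rewrite Rabs_mult. rewrite (Rabs_right (t ^ j)) by (apply Rle_ge, pow_le; lra).
  set (E := exp (- (t * xi ^ 2) / 2)).
  assert (Hexp : exp (- t * (xi ^ 2 - a ^ 2) + 0 * xi) <= exp (- (t * xi ^ 2)) * exp (T * a ^ 2)).
  { rewrite <- exp_plus. apply exp_le. assert (0 <= a^2) by nra.
    assert (t*a^2 <= T*a^2) by (apply Rmult_le_compat_r; lra). lra. }
  assert (Hj : japan xi ^ beta * / japan xi ^ beta = 1).
  { apply Rinv_r. apply pow_nonzero. apply Rgt_not_eq, japan_pos. }
  pose proof (japan_pos xi) as Hjp.
  assert (HE : 0 < E) by apply exp_pos.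
  assert (Hq : Cnorm (xi, a) <= Rabs xi + Rabs a) by (eapply Rle_trans; [apply Cnorm_le_sum|simpl; lra]).
  pose proof (Rabs_pos c). pose proof (Rabs_pos a). pose proof (Rabs_pos xi).
  assert (0 <= t ^ j) by (apply pow_le; lra).
  assert (0 <= Cnorm (xi, a) ^ k) by (apply pow_le, Cnorm_ge0).
  pose proof (exp_pos (- t * (xi ^ 2 - a ^ 2) + 0 * xi)).
  pose proof (exp_pos (- (t * xi ^ 2))). pose proof (exp_pos (T * a ^ 2)).
  assert (0 < / japan xi ^ beta) by (apply Rinv_0_lt_compat, pow_lt; auto).
  unfold gdec. fold E.
  destruct (Rle_lt_dec (Rabs xi) 1) as [Hs|Hl].
  -
    assert (Hjb : japan xi ^ beta <= 2 ^ beta).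
    { apply pow_incr. split. lra. unfold japan. rewrite <- (sqrt_pow2 2) by lra.
      apply sqrt_le_1_alt. rewrite <- (pow2_abs xi). nra. }
    assert (K1 : t ^ j <= T ^ j) by (apply pow_incr; lra).
    assert (K2 : Cnorm (xi, a) ^ k <= (1 + Rabs a) ^ k) by (apply pow_incr; split; [apply Cnorm_ge0|lra]).
    assert (K3 : exp (- (t * xi ^ 2)) <= 1) by (rewrite <- exp_0; apply exp_le; nra).
    set (P := Rabs c * (1 + Rabs a) ^ k * exp (T * a ^ 2) * T ^ j).
    assert (LHS : Rabs c * t ^ j * (Cnorm (xi, a) ^ k * exp (- t * (xi ^ 2 - a ^ 2) + 0 * xi)) <= P).
    { unfold P. apply Rle_trans with (Rabs c * T ^ j * ((1 + Rabs a) ^ k * (1 * exp (T * a ^ 2)))).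
      apply Rmult_le_compat. apply Rmult_le_pos; lra. apply Rmult_le_pos; lra.
      apply Rmult_le_compat_l; lra.
      apply Rmult_le_compat; try lra. eapply Rle_trans. apply Hexp. apply Rmult_le_compat_r; lra.
      lra. }
    assert (P <= (D - 1) * / 2 ^ beta).
    { replace ((D - 1) * / 2 ^ beta) with (Rabs c * (1 + Rabs a) ^ k * exp (T * a ^ 2) * (T ^ j + 2 ^ j * INR j ^ j))
        by (unfold D; field; apply pow_nonzero; lra).
      unfold P.
      assert (0 <= 2^j * INR j ^ j) by (apply Rmult_le_pos; apply pow_le; try lra; apply pos_INR).
      assert (0 <= Rabs c * (1 + Rabs a) ^ k * exp (T * a ^ 2)) by (apply Rmult_le_pos; [apply Rmult_le_pos|]; try apply pow_le; lra).
      apply Rmult_le_compat_l; lra. }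
    assert (/ 2 ^ beta <= / japan xi ^ beta) by (apply Rinv_le_contravar; auto; apply pow_lt; auto).
    assert (0 <= xi ^ 2 * E) by (apply Rmult_le_pos; nra).
    assert ((D - 1) * / 2 ^ beta <= D * (/ japan xi ^ beta * (1 + xi ^ 2 * E))).
    { apply Rle_trans with (D * / japan xi ^ beta * 1).
      rewrite Rmult_1_r. apply Rmult_le_compat; try lra. left; apply Rinv_0_lt_compat, pow_lt; lra.
      rewrite Rmult_assoc. apply Rmult_le_compat_l. lra. apply Rmult_le_compat_l; lra. }
    lra.
  -
    assert (Hx1 : 1 <= Rabs xi) by lra.
    assert (Hq2 : Cnorm (xi, a) ^ k <= (1 + Rabs a) ^ k * Rabs xi ^ k).
    { rewrite <- Rpow_mult_distr. apply pow_incr. split. apply Cnorm_ge0. nra. }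
    assert (Hid : t ^ j * Rabs xi ^ k * Rabs xi ^ beta = xi ^ 2 * (t * xi ^ 2) ^ j).
    { replace (t ^ j * Rabs xi ^ k * Rabs xi ^ beta) with (t ^ j * Rabs xi ^ (k + beta)) by (rewrite pow_add; ring).
      assert (Hk : (k + beta = 2 + 2 * j)%nat) by lia.
      rewrite Hk, pow_add, pow_mult, pow2_abs, Rpow_mult_distr. ring. }
    assert (Hpe : (t * xi ^ 2) ^ j * exp (- (t * xi ^ 2)) <= 2 ^ j * INR j ^ j * E).
    { set (v := t * xi ^ 2 / 2).
      assert (Hv : 0 <= v) by (unfold v; apply Rmult_le_pos; [apply Rmult_le_pos|]; nra).
      pose proof (pow_le_exp j v Hv) as P.
      assert (Ev : E = exp (- v)) by (unfold E; f_equal; unfold v; field).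
      assert (Tx : (t*xi^2)^j = 2^j * v^j) by (rewrite <- Rpow_mult_distr; f_equal; unfold v; field).
      assert (Ex : exp (-(t*xi^2)) = exp (-v) * exp (-v)) by (rewrite <- exp_plus; f_equal; unfold v; field).
      rewrite Tx, Ex, Ev.
      assert (Hev : exp v * exp (- v) = 1) by (rewrite <- exp_plus; replace (v + - v) with 0 by ring; apply exp_0).
      pose proof (exp_pos (- v)). assert (0 <= 2^j) by (apply pow_le; lra).
      apply Rle_trans with (2 ^ j * (INR j ^ j * exp v) * exp (- v) * exp (- v)).
      { replace (2 ^ j * v ^ j * (exp (- v) * exp (- v))) with (2 ^ j * v ^ j * exp (- v) * exp (- v)) by ring.
        repeat apply Rmult_le_compat_r; try lra. apply Rmult_le_compat_l; auto. }
      right. replace (2 ^ j * (INR j ^ j * exp v) * exp (- v) * exp (- v)) with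
        (2 ^ j * INR j ^ j * (exp v * exp (- v)) * exp (- v)) by ring. rewrite Hev. ring. }
    assert (Hjb : japan xi ^ beta <= 2 ^ beta * Rabs xi ^ beta).
    { rewrite <- Rpow_mult_distr. apply pow_incr. split. lra. unfold japan.
      rewrite <- (sqrt_pow2 (2 * Rabs xi)) by lra. apply sqrt_le_1_alt. rewrite <- (pow2_abs xi). nra. }
    assert (Hxb : 0 < Rabs xi ^ beta) by (apply pow_lt; lra).
    set (G := Rabs c * (1 + Rabs a) ^ k * exp (T * a ^ 2)).
    assert (HG : 0 <= G) by (unfold G; apply Rmult_le_pos; [apply Rmult_le_pos|]; try apply pow_le; lra).
    assert (Step1 : Rabs c * t ^ j * (Cnorm (xi, a) ^ k * exp (- t * (xi ^ 2 - a ^ 2) + 0 * xi))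
                    <= G * (t ^ j * Rabs xi ^ k * exp (- (t * xi ^ 2)))).
    { unfold G. apply Rle_trans with (Rabs c * t ^ j * (((1 + Rabs a) ^ k * Rabs xi ^ k) * (exp (- (t * xi ^ 2)) * exp (T * a ^ 2)))).
      apply Rmult_le_compat_l. apply Rmult_le_pos; lra. apply Rmult_le_compat; lra.
      right. ring. }
    assert (Step2 : t ^ j * Rabs xi ^ k * exp (- (t * xi ^ 2)) <= 2 ^ j * INR j ^ j * xi ^ 2 * E * / Rabs xi ^ beta).
    { apply (Rmult_le_reg_r (Rabs xi ^ beta)); auto.
      replace (2 ^ j * INR j ^ j * xi ^ 2 * E * / Rabs xi ^ beta * Rabs xi ^ beta) with (2 ^ j * INR j ^ j * xi ^ 2 * E)
        by (field; repeat split; apply pow_nonzero; apply Rgt_not_eq; lra).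
      replace (t ^ j * Rabs xi ^ k * exp (- (t * xi ^ 2)) * Rabs xi ^ beta) with
        (xi ^ 2 * ((t * xi ^ 2) ^ j * exp (- (t * xi ^ 2)))) by (rewrite <- Rmult_assoc, <- Hid; ring).
      replace (2 ^ j * INR j ^ j * xi ^ 2 * E) with (xi ^ 2 * (2 ^ j * INR j ^ j * E)) by ring.
      apply Rmult_le_compat_l; auto. nra. }
    assert (Step3 : / Rabs xi ^ beta <= 2 ^ beta * / japan xi ^ beta).
    { apply (Rmult_le_reg_r (japan xi ^ beta * Rabs xi ^ beta)). apply Rmult_lt_0_compat; auto. apply pow_lt; auto.
      replace (/ Rabs xi ^ beta * (japan xi ^ beta * Rabs xi ^ beta)) with (japan xi ^ beta) by (field; repeat split; apply pow_nonzero; apply Rgt_not_eq; lra).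
      replace (2 ^ beta * / japan xi ^ beta * (japan xi ^ beta * Rabs xi ^ beta)) with (2 ^ beta * Rabs xi ^ beta) by (field; repeat split; apply pow_nonzero; apply Rgt_not_eq; lra).
      auto. }
    assert (0 <= 2 ^ j * INR j ^ j) by (apply Rmult_le_pos; apply pow_le; try lra; apply pos_INR).
    assert (0 <= xi ^ 2 * E) by (apply Rmult_le_pos; nra).
    assert (Step4 : G * (2 ^ j * INR j ^ j * xi ^ 2 * E * / Rabs xi ^ beta) <= (D - 1) * (/ japan xi ^ beta * (xi ^ 2 * E))).
    { apply Rle_trans with (G * (2 ^ j * INR j ^ j) * 2 ^ beta * (/ japan xi ^ beta * (xi ^ 2 * E))).
      replace (G * (2 ^ j * INR j ^ j * xi ^ 2 * E * / Rabs xi ^ beta)) with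
        (G * (2 ^ j * INR j ^ j) * (xi ^ 2 * E) * / Rabs xi ^ beta) by ring.
      replace (G * (2 ^ j * INR j ^ j) * 2 ^ beta * (/ japan xi ^ beta * (xi ^ 2 * E))) with
        (G * (2 ^ j * INR j ^ j) * (xi ^ 2 * E) * (2 ^ beta * / japan xi ^ beta)) by ring.
      apply Rmult_le_compat_l; auto. apply Rmult_le_pos; [apply Rmult_le_pos|]; auto.
      apply Rmult_le_compat_r. apply Rmult_le_pos; lra.
      unfold D. fold G. replace (G * 2 ^ beta * (T ^ j + 2 ^ j * INR j ^ j) + 1 - 1) with
        (G * (2 ^ j * INR j ^ j) * 2 ^ beta + G * T^j * 2^beta) by ring.
      assert (0 <= G * T^j * 2^beta) by (apply Rmult_le_pos; [apply Rmult_le_pos|]; auto; apply pow_le; lra).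
      lra. }
    assert (0 <= (D - 1) * (/ japan xi ^ beta * (xi ^ 2 * E))) by (apply Rmult_le_pos; [lra| apply Rmult_le_pos; lra]).
    assert ((D - 1) * (/ japan xi ^ beta * (xi ^ 2 * E)) <= D * (/ japan xi ^ beta * (1 + xi ^ 2 * E))).
    { apply Rmult_le_compat; [lra | apply Rmult_le_pos; lra | lra | apply Rmult_le_compat_l; lra]. }
    assert (G * (t ^ j * Rabs xi ^ k * exp (- (t * xi ^ 2))) <= G * (2 ^ j * INR j ^ j * xi ^ 2 * E * / Rabs xi ^ beta))
      by (apply Rmult_le_compat_l; auto).
    lra.
Qed.

Definition Ccont (f : R -> Cplx) (y : R) : Prop :=
  continuous (fun t => fst (f t)) y /\ continuous (fun t => snd (f t)) y.
Definition CcontOn (f : R -> Cplx) (a b : R) : Prop := forall y, a <= y <= b -> Ccont f y.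

Lemma RD_Ccont g x L : RD g x L -> Ccont g x.
Proof. intro H. split; [eapply RD_cont_fst| eapply RD_cont_snd]; eauto. Qed.

Lemma RInt_val_eq f a b : ex_RInt f a b -> RInt_val f a b = RInt f a b.
Proof.
  intro H. unfold RInt_val.
  destruct (epsilon_spec (inhabits 0) (fun v => exists pr : Riemann_integrable f a b, RiemannInt pr = v))
    as [pr Hpr].
  - exists (RInt f a b). exists (ex_RInt_Reals_0 f a b H). symmetry. apply RInt_Reals.
  - rewrite <- Hpr. symmetry. apply RInt_Reals.
Qed.

Lemma CcontOn_ex f a b : a <= b -> CcontOn f a b ->
  ex_RInt (fun t => fst (f t)) a b /\ ex_RInt (fun t => snd (f t)) a b.
Proof.
  intros Hab H. split; apply (ex_RInt_continuous (V:=R_CompleteNormedModule)); intros y Hy;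
  rewrite Rmin_left, Rmax_right in Hy by lra; apply H; lra.
Qed.

Lemma CInt_eq f a b : a <= b -> CcontOn f a b ->
  CInt f a b = (RInt (fun t => fst (f t)) a b, RInt (fun t => snd (f t)) a b).
Proof.
  intros Hab H. destruct (CcontOn_ex f a b Hab H) as [H1 H2]. unfold CInt.
  rewrite !RInt_val_eq; auto.
Qed.

Lemma Ccont_add f g y : Ccont f y -> Ccont g y -> Ccont (fun t => Cadd (f t) (g t)) y.
Proof.
  intros [F1 F2] [G1 G2]. split.
  - exact (continuous_plus (fun t => fst (f t)) (fun t => fst (g t)) y F1 G1).
  - exact (continuous_plus (fun t => snd (f t)) (fun t => snd (g t)) y F2 G2).
Qed.
Lemma Ccont_opp f y : Ccont f y -> Ccont (fun t => Copp (f t)) y.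
Proof.
  intros [F1 F2]. split.
  - exact (continuous_opp (fun t => fst (f t)) y F1).
  - exact (continuous_opp (fun t => snd (f t)) y F2).
Qed.
Lemma Ccont_sub f g y : Ccont f y -> Ccont g y -> Ccont (fun t => Csub (f t) (g t)) y.
Proof. intros. apply Ccont_add; auto. apply Ccont_opp; auto. Qed.
Lemma Ccont_mul f g y : Ccont f y -> Ccont g y -> Ccont (fun t => Cmul (f t) (g t)) y.
Proof.
  intros [F1 F2] [G1 G2]. split.
  - exact (continuous_minus _ _ y (continuous_mult (fun t => fst (f t)) (fun t => fst (g t)) y F1 G1)
                                  (continuous_mult (fun t => snd (f t)) (fun t => snd (g t)) y F2 G2)).
  - exact (continuous_plus _ _ y (continuous_mult (fun t => fst (f t)) (fun t => snd (g t)) y F1 G2)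
                                  (continuous_mult (fun t => snd (f t)) (fun t => fst (g t)) y F2 G1)).
Qed.
Lemma Ccont_const c y : Ccont (fun _ => c) y.
Proof. split; apply continuous_const. Qed.
Lemma Ccont_ext f g y : (forall t, f t = g t) -> Ccont f y -> Ccont g y.
Proof.
  intros E [F1 F2]. split.
  - apply (continuous_ext (fun t => fst (f t))); auto. intro t; rewrite E; auto.
  - apply (continuous_ext (fun t => snd (f t))); auto. intro t; rewrite E; auto.
Qed.

Lemma CInt_add f g a b : a <= b -> CcontOn f a b -> CcontOn g a b ->
  CInt (fun t => Cadd (f t) (g t)) a b = Cadd (CInt f a b) (CInt g a b).
Proof.
  intros Hab Hf Hg.
  assert (Hfg : CcontOn (fun t => Cadd (f t) (g t)) a b) by (intros y Hy; apply Ccont_add; auto).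
  destruct (CcontOn_ex f a b Hab Hf) as [F1 F2]. destruct (CcontOn_ex g a b Hab Hg) as [G1 G2].
  rewrite !CInt_eq; auto. unfold Cadd. cbn [fst snd]. f_equal.
  - exact (RInt_plus (fun t => fst (f t)) (fun t => fst (g t)) a b F1 G1).
  - exact (RInt_plus (fun t => snd (f t)) (fun t => snd (g t)) a b F2 G2).
Qed.

Lemma RInt_scalR g a b k : ex_RInt g a b -> RInt (fun t => k * g t) a b = k * RInt g a b.
Proof. intro H. exact (RInt_scal g a b k H). Qed.
Lemma ex_RInt_scalR g a b k : ex_RInt g a b -> ex_RInt (fun t => k * g t) a b.
Proof. intro H. exact (ex_RInt_scal g a b k H). Qed.
Lemma RInt_plusR f g a b : ex_RInt f a b -> ex_RInt g a b -> RInt (fun t => f t + g t) a b = RInt f a b + RInt g a b.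
Proof. intros. exact (RInt_plus f g a b H H0). Qed.
Lemma RInt_minusR f g a b : ex_RInt f a b -> ex_RInt g a b -> RInt (fun t => f t - g t) a b = RInt f a b - RInt g a b.
Proof. intros. exact (RInt_minus f g a b H H0). Qed.

Lemma CInt_cmul c f a b : a <= b -> CcontOn f a b ->
  CInt (fun t => Cmul c (f t)) a b = Cmul c (CInt f a b).
Proof.
  intros Hab Hf.
  assert (Hcf : CcontOn (fun t => Cmul c (f t)) a b) by (intros y Hy; apply Ccont_mul; auto; apply Ccont_const).
  destruct (CcontOn_ex f a b Hab Hf) as [F1 F2].
  rewrite !CInt_eq; auto. unfold Cmul. cbn [fst snd]. f_equal.
  - rewrite RInt_minusR by (apply ex_RInt_scalR; auto). rewrite !RInt_scalR by auto. reflexivity.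
  - rewrite RInt_plusR by (apply ex_RInt_scalR; auto). rewrite !RInt_scalR by auto. reflexivity.
Qed.
Lemma CInt_sub f g a b : a <= b -> CcontOn f a b -> CcontOn g a b ->
  CInt (fun t => Csub (f t) (g t)) a b = Csub (CInt f a b) (CInt g a b).
Proof.
  intros Hab Hf Hg. unfold Csub at 1.
  rewrite CInt_add; auto.
  - replace (fun t => Copp (g t)) with (fun t => Cmul (-1, 0) (g t)) by (apply functional_extensionality; intro; ceq).
    rewrite CInt_cmul; auto. generalize (CInt f a b) (CInt g a b); intros; ceq.
  - intros y Hy. apply Ccont_opp; auto.
Qed.

Lemma CInt_mulc f c a b : a <= b -> CcontOn f a b ->
  CInt (fun t => Cmul (f t) c) a b = Cmul (CInt f a b) c.
Proof.
  intros. replace (fun t => Cmul (f t) c) with (fun t => Cmul c (f t)) by (apply functional_extensionality; intro; ceq).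
  rewrite CInt_cmul; auto. generalize (CInt f a b); intros; ceq.
Qed.

Lemma CInt_bound f B a b : a <= b -> CcontOn f a b -> (forall y, a <= y <= b -> continuous B y) ->
  (forall y, a <= y <= b -> Cnorm (f y) <= B y) -> Cnorm (CInt f a b) <= 2 * RInt B a b.
Proof.
  intros Hab Hf HB Hle. destruct (CcontOn_ex f a b Hab Hf) as [F1 F2].
  assert (EB : ex_RInt B a b) by (apply (ex_RInt_continuous (V:=R_CompleteNormedModule)); intros y Hy; rewrite Rmin_left, Rmax_right in Hy by lra; auto).
  rewrite CInt_eq; auto. eapply Rle_trans. apply Cnorm_le_sum. cbn [fst snd].
  assert (K : forall g, ex_RInt g a b -> (forall y, a <= y <= b -> Rabs (g y) <= B y) -> Rabs (RInt g a b) <= RInt B a b).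
  { intros g Eg Hg. apply Rabs_le. split.
    - assert (RInt (fun t => - B t) a b <= RInt g a b).
      { apply RInt_le; auto. apply (ex_RInt_opp (V:=R_NormedModule)) in EB. exact EB.
        intros y Hy. specialize (Hg y ltac:(lra)). apply Rabs_le_between in Hg. lra. }
      assert (E : RInt (fun t => - B t) a b = - RInt B a b) by exact (RInt_opp (V:=R_CompleteNormedModule) B a b EB).
      rewrite E in H. lra.
    - apply RInt_le; auto. intros y Hy. specialize (Hg y ltac:(lra)). apply Rabs_le_between in Hg. lra. }
  assert (A1 := K _ F1 ltac:(intros y Hy; eapply Rle_trans; [apply Cnorm_fst| auto])).
  assert (A2 := K _ F2 ltac:(intros y Hy; eapply Rle_trans; [apply Cnorm_snd| auto])).
  lra.
Qed.

Lemma CInt_FTC F f a b : a <= b -> (forall y, a <= y <= b -> RD F y (f y)) -> CcontOn f a b ->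
  CInt f a b = Csub (F b) (F a).
Proof.
  intros Hab HD Hf. rewrite CInt_eq; auto. unfold Csub, Cadd, Copp. cbn [fst snd]. f_equal.
  - apply is_RInt_unique. apply (is_RInt_derive (V:=R_CompleteNormedModule) (fun t => fst (F t)) (fun t => fst (f t))).
    + intros y Hy. rewrite Rmin_left, Rmax_right in Hy by lra. apply is_derive_Reals.
      apply RD_comp. auto.
    + intros y Hy. rewrite Rmin_left, Rmax_right in Hy by lra. apply Hf; auto.
  - apply is_RInt_unique. apply (is_RInt_derive (V:=R_CompleteNormedModule) (fun t => snd (F t)) (fun t => snd (f t))).
    + intros y Hy. rewrite Rmin_left, Rmax_right in Hy by lra. apply is_derive_Reals.
      apply RD_comp. auto.
    + intros y Hy. rewrite Rmin_left, Rmax_right in Hy by lra. apply Hf; auto.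
Qed.

Lemma CInt_ext_on f g a b : a <= b -> CcontOn f a b -> CcontOn g a b ->
  (forall y, a <= y <= b -> f y = g y) -> CInt f a b = CInt g a b.
Proof.
  intros Hab Hf Hg E. rewrite !CInt_eq; auto. f_equal; apply RInt_ext; intros y Hy;
  rewrite Rmin_left, Rmax_right in Hy by lra; rewrite E; auto; lra.
Qed.

Lemma RInt_atan x T1 T2 : RInt (fun y => / (1 + (y - x) ^ 2)) T1 T2 = atan (T2 - x) - atan (T1 - x).
Proof.
  apply is_RInt_unique.
  apply (is_RInt_derive (V:=R_CompleteNormedModule) (fun y => atan (y - x)) (fun y => / (1 + (y - x) ^ 2))).
  - intros y _. apply is_derive_Reals.
    pose proof (derivable_pt_lim_comp (fun y => y - x) atan y 1 _
      ltac:(apply is_derive_Reals; auto_derive; auto; ring) (derivable_pt_lim_atan (y - x))) as H.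
    unfold comp in H. eapply dpl_val. exact H. ring.
  - intros y _. apply (continuous_Rinv_comp (fun y => 1 + (y - x)^2)).
    apply (ex_derive_continuous (K:=R_AbsRing) (V:=R_NormedModule)). auto_derive; auto. apply Rgt_not_eq. pose proof (pow2_ge_0 (y - x)). lra.
Qed.

Lemma ex_RInt_atan x T1 T2 : ex_RInt (fun y => / (1 + (y - x) ^ 2)) T1 T2.
Proof.
  apply (ex_RInt_continuous (V:=R_CompleteNormedModule)). intros y _.
  apply (continuous_Rinv_comp (fun y => 1 + (y - x)^2)).
  apply (ex_derive_continuous (K:=R_AbsRing) (V:=R_NormedModule)). auto_derive; auto. apply Rgt_not_eq. pose proof (pow2_ge_0 (y - x)). lra.
Qed.

Lemma cont_atan_dens x y : continuous (fun y => / (1 + (y - x) ^ 2)) y.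
Proof.
  apply (continuous_Rinv_comp (fun y => 1 + (y - x)^2)).
  apply (ex_derive_continuous (K:=R_AbsRing) (V:=R_NormedModule)). auto_derive; auto. apply Rgt_not_eq. pose proof (pow2_ge_0 (y - x)). lra.
Qed.

Definition Clim (F : R -> Cplx) (v : Cplx) : Prop :=
  forall eps, 0 < eps -> exists M, forall T, M <= T -> Cnorm (Csub (F T) v) < eps.

Lemma nat_above r : exists n : nat, r < INR n.
Proof. destruct (INR_archimed 1 r ltac:(lra)) as [n Hn]. exists n. lra. Qed.

Lemma atan_le x y : x <= y -> atan x <= atan y.
Proof. intro H. destruct (Req_dec x y) as [->|]; [lra|]. left; apply atan_increasing; lra. Qed.

Lemma atan_tends x e : 0 < e -> exists M, forall T, M <= T -> PI / 2 - atan (T - x) < e.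
Proof.
  intro He. pose proof PI2_1.
  set (d := Rmin e (PI/2) / 2).
  assert (Hd : 0 < d) by (unfold d; apply Rmin_case; lra).
  assert (Hd2 : d < PI/2) by (unfold d; pose proof (Rmin_r e (PI/2)); lra).
  assert (Hde : d < e) by (unfold d; pose proof (Rmin_l e (PI/2)); lra).
  exists (x + tan (PI/2 - d)). intros T HT.
  assert (atan (tan (PI/2 - d)) = PI/2 - d) by (apply atan_tan; lra).
  assert (atan (tan (PI/2 - d)) <= atan (T - x)) by (apply atan_le; lra).
  lra.
Qed.

Lemma real_lim (F : R -> R) x C : 0 <= C ->
  (forall T T', 0 <= T <= T' -> Rabs (F T' - F T) <= C * (atan (T' - x) - atan (T - x))) ->
  exists l, forall eps, 0 < eps -> exists M, forall T, M <= T -> Rabs (F T - l) < eps.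
Proof.
  intros HC HF.
  assert (Tail : forall eps, 0 < eps -> exists M, 0 <= M /\ forall T T', M <= T <= T' -> Rabs (F T' - F T) < eps).
  { intros eps He. destruct (atan_tends x (eps / (C + 1)) ltac:(apply Rdiv_lt_0_compat; lra)) as [M HM].
    exists (Rmax M 0). split. apply Rmax_r. intros T T' HT.
    eapply Rle_lt_trans. apply HF. pose proof (Rmax_r M 0); lra.
    pose proof (atan_bound (T' - x)). specialize (HM T ltac:(pose proof (Rmax_l M 0); lra)).
    assert (C * (PI / 2 - atan (T - x)) <= C * (eps / (C + 1))) by (apply Rmult_le_compat_l; lra).
    assert (C * (eps / (C + 1)) < eps).
    { replace (C * (eps / (C + 1))) with (eps * (C / (C + 1))) by (field; lra).
      assert (C / (C + 1) < 1) by (apply (Rmult_lt_reg_r (C+1)); [lra|]; unfold Rdiv; rewrite Rmult_assoc, Rinv_l by lra; lra).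
      assert (0 <= C / (C+1)) by (apply Rdiv_le_0_compat; lra). nra. }
    assert (C * (atan (T' - x) - atan (T - x)) <= C * (PI / 2 - atan (T - x))) by (apply Rmult_le_compat_l; lra).
    lra. }
  set (u := fun n : nat => F (INR n)).
  assert (Cu : Cauchy_crit u).
  { intros eps He. destruct (Tail eps He) as [M [HM0 HM]]. destruct (nat_above M) as [N HN].
    exists N. intros n m Hn Hm. unfold Rdist, u.
    apply le_INR in Hn. apply le_INR in Hm.
    destruct (Rle_dec (INR n) (INR m)).
    - rewrite Rabs_minus_sym. apply HM; lra.
    - apply HM; lra. }
  destruct (Rcomplete.R_complete u Cu) as [l Hl].
  exists l. intros eps He.
  destruct (Tail (eps/2) ltac:(lra)) as [M [HM0 HM]].
  exists M. intros T HT.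
  destruct (Hl (eps/2) ltac:(lra)) as [N HN].
  destruct (nat_above (Rmax T (INR N))) as [n Hn].
  assert (Hn1 : (n >= N)%nat). { apply INR_le. pose proof (Rmax_r T (INR N)). lra. }
  specialize (HN n Hn1). unfold Rdist, u in HN.
  assert (Rabs (F (INR n) - F T) < eps / 2) by (apply HM; pose proof (Rmax_l T (INR N)); lra).
  replace (F T - l) with ((F (INR n) - l) - (F (INR n) - F T)) by ring.
  eapply Rle_lt_trans. apply Rabs_triang. rewrite Rabs_Ropp. lra.
Qed.

Lemma CInt_chasles f a b c : a <= b <= c -> CcontOn f a c ->
  CInt f a c = Cadd (CInt f a b) (CInt f b c).
Proof.
  intros H Hf.
  assert (Hab : CcontOn f a b) by (intros y Hy; apply Hf; lra).
  assert (Hbc : CcontOn f b c) by (intros y Hy; apply Hf; lra).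
  destruct (CcontOn_ex f a b ltac:(lra) Hab) as [A1 A2].
  destruct (CcontOn_ex f b c ltac:(lra) Hbc) as [B1 B2].
  rewrite !CInt_eq; auto; try lra. unfold Cadd. cbn [fst snd]. f_equal; symmetry.
  - exact (RInt_Chasles (V:=R_CompleteNormedModule) (fun t => fst (f t)) a b c A1 B1).
  - exact (RInt_Chasles (V:=R_CompleteNormedModule) (fun t => snd (f t)) a b c A2 B2).
Qed.

Lemma CInt_atan_bound f x C T T' : 0 <= C -> T <= T' -> CcontOn f T T' ->
  (forall y, T <= y <= T' -> Cnorm (f y) <= C * / (1 + (y - x) ^ 2)) ->
  Cnorm (CInt f T T') <= 2 * C * (atan (T' - x) - atan (T - x)).
Proof.
  intros HC HT Hf Hb. eapply Rle_trans. apply (CInt_bound f (fun y => C * / (1 + (y - x) ^ 2))); auto.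
  - intros y _. apply (continuous_mult (fun _ => C) (fun y => / (1 + (y - x)^2))). apply continuous_const. apply cont_atan_dens.
  - rewrite RInt_scalR by apply ex_RInt_atan. rewrite RInt_atan. lra.
Qed.

Lemma improper f x C : 0 <= C -> (forall y, 0 <= y -> Ccont f y) ->
  (forall y, 0 <= y -> Cnorm (f y) <= C * / (1 + (y - x) ^ 2)) ->
  (forall T T', 0 <= T <= T' -> Cnorm (Csub (CInt f 0 T') (CInt f 0 T)) <= 2 * C * (atan (T' - x) - atan (T - x)))
  /\ (forall T, 0 <= T -> Cnorm (CInt f 0 T) <= 2 * C * PI)
  /\ (exists v, Clim (fun T => CInt f 0 T) v).
Proof.
  intros HC Hc Hb.
  assert (D : forall T T', 0 <= T <= T' -> Cnorm (Csub (CInt f 0 T') (CInt f 0 T)) <= 2 * C * (atan (T' - x) - atan (T - x))).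
  { intros T T' HT. rewrite (CInt_chasles f 0 T T') by (first [lra | intros y Hy; apply Hc; lra]).
    replace (Csub (Cadd (CInt f 0 T) (CInt f T T')) (CInt f 0 T)) with (CInt f T T')
      by (generalize (CInt f 0 T) (CInt f T T'); intros; ceq).
    apply CInt_atan_bound; [lra|lra| intros y Hy; apply Hc; lra| intros y Hy; apply Hb; lra]. }
  split; [exact D|]. split.
  - intros T HT. eapply Rle_trans. apply (CInt_atan_bound f x C); [lra|lra| intros y Hy; apply Hc; lra| intros y Hy; apply Hb; lra].
    pose proof (atan_bound (T - x)). pose proof (atan_bound (0 - x)).
    assert (atan (T - x) - atan (0 - x) <= PI) by lra.
    apply Rmult_le_compat_l; lra.
  - destruct (real_lim (fun T => fst (CInt f 0 T)) x (2 * C) ltac:(lra)) as [l1 H1].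
    { intros T T' HT. eapply Rle_trans; [|apply D; auto]. eapply Rle_trans; [|apply Cnorm_fst]. right. f_equal. }
    destruct (real_lim (fun T => snd (CInt f 0 T)) x (2 * C) ltac:(lra)) as [l2 H2].
    { intros T T' HT. eapply Rle_trans; [|apply D; auto]. eapply Rle_trans; [|apply Cnorm_snd]. right. f_equal. }
    exists (l1, l2). intros eps He.
    destruct (H1 (eps/2) ltac:(lra)) as [M1 HM1]. destruct (H2 (eps/2) ltac:(lra)) as [M2 HM2].
    exists (Rmax M1 M2). intros T HT.
    specialize (HM1 T ltac:(pose proof (Rmax_l M1 M2); lra)). specialize (HM2 T ltac:(pose proof (Rmax_r M1 M2); lra)).
    eapply Rle_lt_trans. apply Cnorm_le_sum. cbn [fst snd]. unfold Csub, Cadd, Copp. cbn [fst snd]. unfold Rminus in *. lra.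
Qed.

Lemma Clim_sub F G u v : Clim F u -> Clim G v -> Clim (fun T => Csub (F T) (G T)) (Csub u v).
Proof.
  intros HF HG eps He. destruct (HF (eps/2) ltac:(lra)) as [M1 P1]. destruct (HG (eps/2) ltac:(lra)) as [M2 P2].
  exists (Rmax M1 M2). intros T HT.
  specialize (P1 T ltac:(pose proof (Rmax_l M1 M2); lra)). specialize (P2 T ltac:(pose proof (Rmax_r M1 M2); lra)).
  replace (Csub (Csub (F T) (G T)) (Csub u v)) with (Csub (Csub (F T) u) (Csub (G T) v))
    by (generalize (F T) (G T); intros; ceq).
  eapply Rle_lt_trans. apply Cnorm_sub_tri. lra.
Qed.

Lemma Clim_const c : Clim (fun _ => c) c.
Proof. intros eps He. exists 0. intros. replace (Csub c c) with C0 by ceq. rewrite Cnorm_C0. lra. Qed.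

Lemma Clim_bound F v B (e : R -> R) : Clim F v ->
  (forall eps, 0 < eps -> exists M, forall T, M <= T -> e T < eps) ->
  (exists M0, forall T, M0 <= T -> Cnorm (F T) <= B + e T) -> Cnorm v <= B.
Proof.
  intros HF He [M0 HM0]. apply Rnot_lt_le. intro Hlt.
  set (d := (Cnorm v - B) / 3).
  assert (Hd : 0 < d) by (unfold d; lra).
  destruct (HF d Hd) as [M1 P1]. destruct (He d Hd) as [M2 P2].
  set (T := Rmax M0 (Rmax M1 M2)).
  assert (M0 <= T) by apply Rmax_l.
  assert (M1 <= T) by (unfold T; pose proof (Rmax_l M1 M2); pose proof (Rmax_r M0 (Rmax M1 M2)); lra).
  assert (M2 <= T) by (unfold T; pose proof (Rmax_r M1 M2); pose proof (Rmax_r M0 (Rmax M1 M2)); lra).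
  specialize (HM0 T H). specialize (P1 T H0). specialize (P2 T H1).
  assert (Cnorm v <= Cnorm (F T) + Cnorm (Csub (F T) v)).
  { replace v with (Csub (F T) (Csub (F T) v)) at 1 by (generalize (F T); intros; ceq).
    apply Cnorm_sub_tri. }
  unfold d in *. lra.
Qed.

Lemma Clim_ext F G v : (forall T, F T = G T) -> Clim F v -> Clim G v.
Proof. intros E H eps He. destruct (H eps He) as [M P]. exists M. intros T HT. rewrite <- E. auto. Qed.

Lemma K_evalk a s u : K_a a s u = evalk a (kterms a 0) s u.
Proof.
  unfold K_a, evalk, kterms. simpl Nat.iter. cbn [sumC]. unfold kmon, Mon, cs. simpl Cpow.
  generalize (Cexp (Cadd (Cscal (- / (4 * s)) (Cmul u u)) (Cscal a u))). intro E.
  destruct E. csimpl. simpl pow. rewrite Rinv_1. f_equal; ring.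
Qed.

Lemma LD_K a s : s <> 0 -> LD (K_a a s) (evalk a (kterms a 1) s).
Proof.
  intro Hs. eapply LD_ext; [intro; symmetry; apply K_evalk| intro; reflexivity|].
  apply LD_evalk_iter; auto.
Qed.

Lemma sub_line z y : Csub z (RtoC y) = line z (-1, 0) y.
Proof. unfold line. ceq. Qed.

Lemma LD_Ccont_line F F1 u h y : LD F F1 -> Ccont (fun t => F (line u h t)) y.
Proof. intro H. eapply RD_Ccont. apply H. Qed.

Lemma LD_Ccont_sub F F1 z y : LD F F1 -> Ccont (fun t => F (Csub z (RtoC t))) y.
Proof.
  intro H. apply (Ccont_ext (fun t => F (line z (-1,0) t))). intro t; rewrite sub_line; auto.
  eapply LD_Ccont_line; eauto.
Qed.

Lemma RD_sub_line F F1 z y : LD F F1 -> RD (fun t => F (Csub z (RtoC t))) y (Copp (F1 (Csub z (RtoC y)))).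
Proof.
  intro H. apply (RD_ext (fun t => F (line z (-1,0) t))). intro t; rewrite sub_line; auto.
  eapply RD_val. apply H. rewrite sub_line. generalize (F1 (line z (-1, 0) y)). intro; ceq.
Qed.

Lemma strip_sub z y : snd (Csub z (RtoC y)) = snd z.
Proof. csimpl. ring. Qed.
Lemma fst_sub z y : fst (Csub z (RtoC y)) ^ 2 = (y - fst z) ^ 2.
Proof. csimpl. ring. Qed.

Lemma evalk_decay_y a t0 t1 b L : 0 < t0 -> t0 <= t1 -> 0 <= b ->
  exists C, 0 < C /\ forall s z y, t0 <= s <= t1 -> Rabs (snd z) <= b ->
    Cnorm (evalk a L s (Csub z (RtoC y))) <= C * / (1 + (y - fst z) ^ 2).
Proof.
  intros H0 H1 Hb. destruct (evalk_bound a t0 t1 b L H0 H1 Hb) as [C [HC P]].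
  exists C. split; auto. intros s z y Hs Hz. specialize (P s (Csub z (RtoC y)) Hs).
  rewrite strip_sub, fst_sub in P. apply P; auto.
Qed.

Definition wint a s z := fun y => K_a a s (Csub z (RtoC y)).

Lemma wint_cont a s z y : 0 < s -> Ccont (wint a s z) y.
Proof. intro Hs. unfold wint. eapply LD_Ccont_sub. apply LD_K. lra. Qed.

Lemma w_lim a s z : 0 < s -> Clim (fun T => CInt (wint a s z) 0 T) (w_fun a s z).
Proof.
  intro Hs.
  destruct (evalk_decay_y a s s (Rabs (snd z)) (kterms a 0) Hs (Rle_refl s) (Rabs_pos _)) as [C [HC P]].
  destruct (improper (wint a s z) (fst z) C ltac:(lra) ltac:(intros; apply wint_cont; auto)) as [_ [_ [v Hv]]].
  { intros y _. unfold wint. rewrite K_evalk. apply P; lra. }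
  unfold w_fun, CInt_0_inf.
  set (Pp := fun v : Cplx => forall eps, 0 < eps -> exists M, forall T, M <= T ->
       Cnorm (Csub (CInt (fun y => K_a a s (Csub z (RtoC y))) 0 T) v) < eps).
  change (Pp (epsilon (inhabits (0,0)) Pp)). apply epsilon_spec.
  exists v. exact Hv.
Qed.

Lemma w_bound a t0 t1 b : 0 < t0 -> t0 <= t1 -> 0 <= b ->
  exists W, 0 < W /\ forall s z, t0 <= s <= t1 -> Rabs (snd z) <= b -> Cnorm (w_fun a s z) <= W.
Proof.
  intros H0 H1 Hb. destruct (evalk_decay_y a t0 t1 b (kterms a 0) H0 H1 Hb) as [C [HC P]].
  exists (2 * C * PI). split. pose proof PI_RGT_0. nra.
  intros s z Hs Hz.
  destruct (improper (wint a s z) (fst z) C ltac:(lra) ltac:(intros; apply wint_cont; lra)) as [_ [Hb2 _]].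
  { intros y _. unfold wint. rewrite K_evalk. apply P; lra. }
  apply (Clim_bound _ _ _ (fun _ => 0) (w_lim a s z ltac:(lra))).
  - intros eps He. exists 0. intros; lra.
  - exists 0. intros T HT. rewrite Rplus_0_r. apply Hb2; lra.
Qed.

Lemma shift_ineq X th : Rabs th <= 1 -> 1 + X ^ 2 <= 3 * (1 + (X + th) ^ 2).
Proof. intro H. assert (th^2 <= 1) by (rewrite <- pow2_abs; pose proof (Rabs_pos th); nra).
  assert (0 <= (X + 2 * th)^2) by apply pow2_ge_0.
  assert (X^2 <= 2 * (X + th)^2 + 2 * th^2) by nra. nra. Qed.

Lemma decay_lim C0 x : 0 <= C0 -> forall eps, 0 < eps -> exists M, forall T, M <= T -> C0 * / (1 + (T - x) ^ 2) < eps.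
Proof.
  intros HC eps He. exists (x + C0 / eps + 1). intros T HT.
  assert (Hq : C0 / eps <= T - x - 1) by lra.
  assert (HT1 : 1 <= T - x) by (assert (0 <= C0/eps) by (apply Rdiv_le_0_compat; lra); lra).
  assert (Hp : 0 < 1 + (T - x)^2) by nra.
  apply (Rmult_lt_reg_r (1 + (T - x)^2)); auto.
  rewrite Rmult_assoc, Rinv_l, Rmult_1_r by lra.
  assert (C0 <= eps * (T - x - 1)).
  { apply (Rmult_le_compat_l eps) in Hq; [|lra]. replace (eps * (C0 / eps)) with C0 in Hq by (field; lra). lra. }
  nra.
Qed.

Lemma w_taylor a t0 t1 b : 0 < t0 -> t0 <= t1 -> 0 <= b ->
  exists M, 0 < M /\ forall s z h, t0 <= s <= t1 -> Rabs (snd z) <= b -> Cnorm h <= 1 ->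
    Cnorm (Csub (Csub (w_fun a s (Cadd z h)) (w_fun a s z)) (Cmul (K_a a s z) h)) <= M * Cnorm h ^ 2.
Proof.
  intros H0 H1 Hb.
  destruct (evalk_decay_y a t0 t1 b (kterms a 0) H0 H1 Hb) as [C0 [HC0 P0]].
  destruct (evalk_bound a t0 t1 (b + 1) (kterms a 2) H0 H1 ltac:(lra)) as [C2 [HC2 P2]].
  exists (12 * C2 * PI). split. pose proof PI_RGT_0. nra.
  intros s z h Hs Hz Hh.
  assert (Hs0 : s <> 0) by lra.
  set (K := K_a a s). set (K1 := evalk a (kterms a 1) s). set (K2 := evalk a (kterms a 2) s).
  assert (LK : LD K K1) by (apply LD_K; auto).
  assert (LK1 : LD K1 K2) by (apply LD_evalk_iter; auto).
  set (R := fun y => Csub (Csub (K (Csub (Cadd z h) (RtoC y))) (K (Csub z (RtoC y)))) (Cmul (K1 (Csub z (RtoC y))) h)).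
  set (x := fst z).
  assert (Rb : forall y, 0 <= y -> Cnorm (R y) <= (6 * C2 * Cnorm h ^ 2) * / (1 + (y - x) ^ 2)).
  { intros y _. unfold R.
    replace (Csub (Cadd z h) (RtoC y)) with (Cadd (Csub z (RtoC y)) h) by ceq.
    eapply Rle_trans. apply (LD_taylor K K1 K2 _ h (3 * C2 * / (1 + (y - x) ^ 2))); auto.
    - intros t Ht. unfold K2. eapply Rle_trans. apply P2. lra.
      + unfold line. csimpl. pose proof (Cnorm_snd h). pose proof (Rabs_pos (snd h)).
        replace (snd z + - 0 + t * snd h) with (snd z + t * snd h) by ring.
        eapply Rle_trans; [apply Rabs_triang|]. rewrite Rabs_mult, (Rabs_right t) by lra. nra.
      + unfold line. csimpl.
        assert (Hth : Rabs (t * fst h) <= 1).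
        { rewrite Rabs_mult, (Rabs_right t) by lra. pose proof (Cnorm_fst h). pose proof (Rabs_pos (fst h)). nra. }
        pose proof (shift_ineq (y - x) (- (t * fst h)) ltac:(rewrite Rabs_Ropp; auto)) as SI.
        replace (fst z + - y + t * fst h) with (- (y - x + - (t * fst h))) by (unfold x; ring).
        replace ((- (y - x + - (t * fst h))) ^ 2) with ((y - x + - (t * fst h)) ^ 2) by ring.
        set (W := y - x + - (t * fst h)) in *.
        assert (0 <= W^2) by apply pow2_ge_0. assert (0 <= (y - x)^2) by apply pow2_ge_0.
        unfold Rdiv. apply (Rmult_le_reg_r ((1 + W ^ 2) * (1 + (y - x)^2))). apply Rmult_lt_0_compat; lra.
        replace (C2 * / (1 + W ^ 2) * ((1 + W ^ 2) * (1 + (y - x) ^ 2))) with (C2 * (1 + (y - x)^2)) by (field; lra).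
        replace (3 * C2 * / (1 + (y - x) ^ 2) * ((1 + W ^ 2) * (1 + (y - x) ^ 2))) with (3 * C2 * (1 + W ^ 2)) by (field; lra).
        nra.
    - right. field. apply Rgt_not_eq. pose proof (pow2_ge_0 (y - x)). lra. }
  assert (Cfh : forall y, Ccont (fun y => K (Csub (Cadd z h) (RtoC y))) y) by (intro; eapply LD_Ccont_sub; eauto).
  assert (Cf0 : forall y, Ccont (fun y => K (Csub z (RtoC y))) y) by (intro; eapply LD_Ccont_sub; eauto).
  assert (Cf1 : forall y, Ccont (fun y => K1 (Csub z (RtoC y))) y) by (intro; eapply LD_Ccont_sub; eauto).
  assert (CR : forall y, Ccont R y).
  { intro y. unfold R. apply Ccont_sub; [apply Ccont_sub; auto| apply Ccont_mul; auto; apply Ccont_const]. }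
  assert (Hc6 : 0 <= 6 * C2 * Cnorm h ^ 2) by (pose proof (Cnorm_ge0 h); assert (0 <= Cnorm h ^ 2) by nra; nra).
  destruct (improper R x (6 * C2 * Cnorm h ^ 2) Hc6 (fun y _ => CR y) Rb) as [_ [RB _]].
  assert (Id : forall T, 0 <= T -> Csub (Csub (CInt (wint a s (Cadd z h)) 0 T) (CInt (wint a s z) 0 T)) (Cmul (K z) h)
                 = Csub (CInt R 0 T) (Cmul (K (Csub z (RtoC T))) h)).
  { intros T HT.
    assert (FT : CInt (fun y => Copp (K1 (Csub z (RtoC y)))) 0 T = Csub (K (Csub z (RtoC T))) (K (Csub z (RtoC 0)))).
    { apply (CInt_FTC (fun y => K (Csub z (RtoC y)))); auto. intros y _. apply (RD_sub_line K K1 z y LK). intros y _. apply Ccont_opp; auto. }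
    assert (E0 : Csub z (RtoC 0) = z) by ceq. rewrite E0 in FT.
    replace (fun y => Copp (K1 (Csub z (RtoC y)))) with (fun y => Cmul (-1,0) (K1 (Csub z (RtoC y)))) in FT
      by (apply functional_extensionality; intro; ceq).
    rewrite CInt_cmul in FT; [| lra | intros y _; auto].
    unfold R. rewrite CInt_sub; [| lra | intros y _; apply Ccont_sub; auto | intros y _; apply Ccont_mul; auto; apply Ccont_const].
    rewrite CInt_sub; [| lra | intros y _; auto | intros y _; auto].
    rewrite CInt_mulc; [| lra | intros y _; auto].
    unfold wint. change (K_a a s) with K.
    generalize dependent (CInt (fun y => K1 (Csub z (RtoC y))) 0 T). intros I1 FT.
    generalize (CInt (fun y => K (Csub (Cadd z h) (RtoC y))) 0 T) (CInt (fun y => K (Csub z (RtoC y))) 0 T).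
    intros A B. revert FT. generalize (K (Csub z (RtoC T))) (K z). intros Kt Kz FT.
    destruct I1 as [i1 i2], Kt as [k1 k2], Kz as [k3 k4], A, B, h. csimpl. inversion FT.
    assert (i1 = k3 - k1) by lra. assert (i2 = k4 - k2) by lra. subst i1 i2. f_equal; ring. }
  apply (Clim_bound _ _ _ (fun T => C0 * / (1 + (T - x) ^ 2)) (Clim_sub _ _ _ _ (Clim_sub _ _ _ _ (w_lim a s (Cadd z h) ltac:(lra)) (w_lim a s z ltac:(lra))) (Clim_const (Cmul (K z) h)))).
  - apply decay_lim. lra.
  - exists 0. intros T HT. rewrite Id by auto.
    eapply Rle_trans. apply Cnorm_sub_tri. apply Rplus_le_compat.
    + replace (12 * C2 * PI * Cnorm h ^ 2) with (2 * (6 * C2 * Cnorm h ^ 2) * PI) by ring. apply RB; auto.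
    + rewrite Cnorm_mul. unfold K. rewrite K_evalk.
      assert (Cnorm (evalk a (kterms a 0) s (Csub z (RtoC T))) <= C0 * / (1 + (T - x) ^ 2)) by (apply P0; auto).
      pose proof (Cnorm_ge0 (evalk a (kterms a 0) s (Csub z (RtoC T)))). nra.
Qed.

Definition Ls : list (R * nat * nat) := (-1/2, 1%nat, 0%nat) :: (1/4, 2%nat, 2%nat) :: nil.

Lemma RD_K_s a u sg : 0 < sg -> RD (fun s => K_a a s u) sg (evalk a Ls sg u).
Proof.
  intro Hs. unfold K_a.
  assert (Dc : derivable_pt_lim (fun s => / sqrt (4 * PI * s)) sg (- / (2 * sg) * / sqrt (4 * PI * sg))).
  { apply is_derive_Reals. pose proof PI_RGT_0. auto_derive.
    - repeat split; try nra. apply Rgt_not_eq, sqrt_lt_R0; nra.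
    - rewrite sqrt_sqrt by nra. field. split. apply Rgt_not_eq, sqrt_lt_R0; nra. split; lra. }
  assert (DA : derivable_pt_lim (fun s => - / (4 * s)) sg (/ (4 * sg ^ 2))).
  { apply is_derive_Reals. auto_derive. lra. field. lra. }
  eapply RD_val.
  - eapply (RD_rscal (fun s => / sqrt (4 * PI * s)) (fun s => Cexp (Cadd (Cscal (- / (4 * s)) (Cmul u u)) (Cscal a u))) sg _ _ Dc).
    apply RD_Cexp. apply RD_add. eapply (RD_rscal (fun s => - / (4 * s)) (fun _ => Cmul u u) sg _ _ DA). apply RD_const. apply RD_const.
  - unfold evalk, Ls. cbn [sumC]. unfold kmon, Mon, cs. simpl Cpow.
    generalize (Cexp (Cadd (Cscal (- / (4 * sg)) (Cmul u u)) (Cscal a u))). intro E.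
    assert (0 < sqrt (4 * PI * sg)) by (apply sqrt_lt_R0; pose proof PI_RGT_0; nra).
    destruct E, u. csimpl. simpl pow. f_equal; field; split; lra.
Qed.

Lemma K_lip a t0 t1 b : 0 < t0 -> t0 <= t1 -> 0 <= b ->
  exists C, 0 < C /\ forall s s' u, t0 <= s <= t1 -> t0 <= s' <= t1 -> Rabs (snd u) <= b ->
    Cnorm (Csub (K_a a s u) (K_a a s' u)) <= C * Rabs (s - s') * / (1 + fst u ^ 2).
Proof.
  intros H0 H1 Hb. destruct (evalk_bound a t0 t1 b Ls H0 H1 Hb) as [C [HC P]].
  exists (2 * C). split. lra. intros s s' u Hs Hs' Hu.
  assert (G : forall p q, t0 <= p <= q -> q <= t1 ->
    Cnorm (Csub (K_a a q u) (K_a a p u)) <= 2 * C * (q - p) * / (1 + fst u ^ 2)).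
  { intros p q Hp Hq. eapply Rle_trans. apply (Lip1 (fun s => K_a a s u) (fun s => evalk a Ls s u) p q (C / (1 + fst u ^ 2))).
    lra. intros t Ht. apply RD_K_s. lra. intros t Ht. apply P; auto; lra.
    right. unfold Rdiv. ring. }
  destruct (Rle_dec s' s).
  - rewrite Rabs_right by lra. apply G; lra.
  - rewrite Rabs_left by lra.
    replace (Csub (K_a a s u) (K_a a s' u)) with (Copp (Csub (K_a a s' u) (K_a a s u))) by
      (generalize (K_a a s u) (K_a a s' u); intros; ceq).
    rewrite Cnorm_opp. replace (- (s - s')) with (s' - s) by ring. apply G; lra.
Qed.

Lemma w_lip a t0 t1 b : 0 < t0 -> t0 <= t1 -> 0 <= b ->
  exists L, 0 < L /\ forall s s' z, t0 <= s <= t1 -> t0 <= s' <= t1 -> Rabs (snd z) <= b ->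
    Cnorm (Csub (w_fun a s z) (w_fun a s' z)) <= L * Rabs (s - s').
Proof.
  intros H0 H1 Hb. destruct (K_lip a t0 t1 b H0 H1 Hb) as [C [HC P]].
  exists (2 * C * PI). split. pose proof PI_RGT_0. nra.
  intros s s' z Hs Hs' Hz.
  set (f := fun y => Csub (wint a s z y) (wint a s' z y)).
  assert (Cf : forall y, 0 <= y -> Ccont f y).
  { intros y _. unfold f. apply Ccont_sub; apply wint_cont; lra. }
  assert (Bf : forall y, 0 <= y -> Cnorm (f y) <= C * Rabs (s - s') * / (1 + (y - fst z) ^ 2)).
  { intros y _. unfold f, wint. rewrite <- fst_sub. apply P; auto. rewrite strip_sub; auto. }
  assert (HC' : 0 <= C * Rabs (s - s')) by (pose proof (Rabs_pos (s - s')); nra).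
  destruct (improper f (fst z) _ HC' Cf Bf) as [_ [Bd _]].
  apply (Clim_bound _ _ _ (fun _ => 0) (Clim_sub _ _ _ _ (w_lim a s z ltac:(lra)) (w_lim a s' z ltac:(lra)))).
  - intros eps He. exists 0. intros; lra.
  - exists 0. intros T HT. rewrite <- CInt_sub; [|lra| intros y Hy; apply wint_cont; lra| intros y Hy; apply wint_cont; lra].
    rewrite Rplus_0_r. eapply Rle_trans. apply Bd; auto. right; ring.
Qed.

Lemma lip_cont (g : R -> R) s0 d L : 0 < d -> 0 <= L ->
  (forall s, Rabs (s - s0) <= d -> Rabs (g s - g s0) <= L * Rabs (s - s0)) -> continuous g s0.
Proof.
  intros Hd HL H. apply continuity_pt_filterlim. unfold continuity_pt, continue_in, limit1_in, limit_in.
  intros eps He. exists (Rmin d (eps / (L + 1))). split. apply Rmin_case; [lra| apply Rdiv_lt_0_compat; lra].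
  intros x [_ Hx]. simpl in Hx. unfold R_dist in Hx. simpl. unfold R_dist.
  assert (Hx1 : Rabs (x - s0) <= d) by (pose proof (Rmin_l d (eps / (L + 1))); lra).
  assert (Hx2 : Rabs (x - s0) < eps / (L + 1)) by (pose proof (Rmin_r d (eps / (L + 1))); lra).
  eapply Rle_lt_trans. apply H; auto.
  apply Rle_lt_trans with ((L + 1) * Rabs (x - s0)). pose proof (Rabs_pos (x - s0)). nra.
  apply (Rmult_lt_compat_l (L + 1)) in Hx2; [|lra]. replace ((L + 1) * (eps / (L + 1))) with eps in Hx2 by (field; lra). lra.
Qed.

Lemma w_cont_s a z s0 : 0 < s0 -> Ccont (fun s => w_fun a s z) s0.
Proof.
  intro Hs0. destruct (w_lip a (s0/2) (2 * s0) (Rabs (snd z)) ltac:(lra) ltac:(lra) (Rabs_pos _)) as [L [HL P]].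
  assert (Hp : forall s, Rabs (s - s0) <= s0 / 2 -> Cnorm (Csub (w_fun a s z) (w_fun a s0 z)) <= L * Rabs (s - s0)).
  { intros s Hs. apply Rabs_le_between in Hs. apply P; [split; lra | split; lra | apply Rle_refl]. }
  split; apply (lip_cont _ s0 (s0/2) L); try lra; intros s Hs; eapply Rle_trans; try apply (Hp s Hs).
  - pose proof (Cnorm_fst (Csub (w_fun a s z) (w_fun a s0 z))). csimpl. unfold Rminus. lra.
  - pose proof (Cnorm_snd (Csub (w_fun a s z) (w_fun a s0 z))). csimpl. unfold Rminus. lra.
Qed.

Lemma RD_Mon_param (A : R -> R) dA s k B z : derivable_pt_lim A s dA ->
  exists L, RD (fun s => Mon k (A s) B z) s L.
Proof.
  intro HA. eexists. unfold Mon. apply RD_mul. apply RD_const. apply RD_Cexp. apply RD_add.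
  eapply (RD_rscal A (fun _ => Cmul z z)). exact HA. apply RD_const. apply RD_const.
Qed.

Lemma ex_derive_dpl (f : R -> R) x : ex_derive f x -> derivable_pt_lim f x (Derive f x).
Proof. intro H. apply is_derive_Reals. apply Derive_correct. auto. Qed.

Lemma kmon_cont a m z s0 : 0 < s0 -> Ccont (fun s => kmon a m s z) s0.
Proof.
  intro Hs. destruct m as [[r n] k]. unfold kmon.
  assert (DA : derivable_pt_lim (fun s => - / (4 * s)) s0 (/ (4 * s0 ^ 2))).
  { apply is_derive_Reals. auto_derive. lra. field. lra. }
  destruct (RD_Mon_param _ _ s0 k a z DA) as [L HL].
  assert (Dc : ex_derive (fun s => r * / s ^ n * cs s) s0).
  { unfold cs. pose proof PI_RGT_0. auto_derive. repeat split; try apply pow_nonzero; try lra; try nra.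
    apply Rgt_not_eq, sqrt_lt_R0; nra. }
  eapply RD_Ccont. apply (RD_rscal (fun s => r * / s ^ n * cs s) (fun s => Mon k (- / (4 * s)) a z) s0 _ _ (ex_derive_dpl _ _ Dc) HL).
Qed.

Lemma evalk_cont a L z s0 : 0 < s0 -> Ccont (fun s => evalk a L s z) s0.
Proof.
  intro Hs. unfold evalk. induction L as [|m L IH]; cbn [sumC].
  - apply Ccont_const.
  - apply Ccont_add; auto. apply kmon_cont; auto.
Qed.

Lemma gmon_cont a m xi ts s0 : Ccont (fun s => gmon a m (ts - s) xi) s0.
Proof.
  destruct m as [[c j] k]. unfold gmon.
  assert (DA : derivable_pt_lim (fun s => - (ts - s)) s0 1).
  { apply is_derive_Reals. auto_derive. auto. ring. }
  destruct (RD_Mon_param _ _ s0 k 0 (xi, a) DA) as [L HL].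
  assert (Dc : ex_derive (fun s => c * (ts - s) ^ j) s0) by (auto_derive; auto).
  eapply RD_Ccont. apply (RD_rscal (fun s => c * (ts - s) ^ j) (fun s => Mon k (- (ts - s)) 0 (xi, a)) s0 _ _ (ex_derive_dpl _ _ Dc) HL).
Qed.

Lemma evalg_cont a L xi ts s0 : Ccont (fun s => evalg a L (ts - s) xi) s0.
Proof.
  unfold evalg. induction L as [|m L IH]; cbn [sumC].
  - apply Ccont_const.
  - apply Ccont_add; auto. apply gmon_cont.
Qed.

Lemma CInt_const_bound f a b M : a <= b -> CcontOn f a b -> (forall y, a <= y <= b -> Cnorm (f y) <= M) ->
  Cnorm (CInt f a b) <= 2 * (b - a) * M.
Proof.
  intros Hab Hf HM. eapply Rle_trans. apply (CInt_bound f (fun _ => M)); auto.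
  intros; apply continuous_const. rewrite RInt_const. unfold scal; simpl. unfold mult; simpl. lra.
Qed.

Lemma param_RD (F F1 : R -> R -> Cplx) a b x0 : a < b ->
  (forall x, CcontOn (fun s => F s x) a b) -> CcontOn (fun s => F1 s x0) a b ->
  (exists M, 0 < M /\ forall s h, a <= s <= b -> Rabs h <= 1 ->
      Cnorm (Csub (Csub (F s (x0 + h)) (F s x0)) (Cscal h (F1 s x0))) <= M * h ^ 2) ->
  RD (fun x => CInt (fun s => F s x) a b) x0 (CInt (fun s => F1 s x0) a b).
Proof.
  intros Hab HF HF1 [M [HM P]] eps He.
  set (K := 2 * (b - a) * M).
  assert (HK : 0 < K) by (unfold K; nra).
  exists (Rmin 1 (eps / K)). split. apply Rmin_case; [lra| apply Rdiv_lt_0_compat; lra].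
  intros h Hh.
  assert (Hh1 : Rabs h <= 1) by (pose proof (Rmin_l 1 (eps / K)); lra).
  assert (Hh2 : Rabs h <= eps / K) by (pose proof (Rmin_r 1 (eps / K)); lra).
  assert (E : Csub (Csub (CInt (fun s => F s (x0 + h)) a b) (CInt (fun s => F s x0) a b)) (Cscal h (CInt (fun s => F1 s x0) a b))
     = CInt (fun s => Csub (Csub (F s (x0 + h)) (F s x0)) (Cscal h (F1 s x0))) a b).
  { assert (Hs : CcontOn (fun s => Cscal h (F1 s x0)) a b).
    { intros y Hy. apply (Ccont_ext (fun s => Cmul (h,0) (F1 s x0))). intro; ceq. apply Ccont_mul. apply Ccont_const. apply HF1; auto. }
    rewrite CInt_sub; [| lra | intros y Hy; apply Ccont_sub; [apply HF| apply HF]; auto | auto].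
    rewrite CInt_sub; [| lra | apply HF | apply HF].
    replace (fun s => Cscal h (F1 s x0)) with (fun s => Cmul (h,0) (F1 s x0)) by (apply functional_extensionality; intro; ceq).
    rewrite CInt_cmul; [| lra | auto]. generalize (CInt (fun s => F1 s x0) a b). intro; ceq. }
  rewrite E. eapply Rle_trans. apply (CInt_const_bound _ a b (M * h ^ 2)). lra.
  { intros y Hy. apply Ccont_sub. apply Ccont_sub; apply HF; auto.
    apply (Ccont_ext (fun s => Cmul (h,0) (F1 s x0))). intro; ceq. apply Ccont_mul. apply Ccont_const. apply HF1; auto. }
  { intros y Hy. apply P; auto. }
  replace (2 * (b - a) * (M * h ^ 2)) with (K * Rabs h * Rabs h) by (unfold K; rewrite <- (pow2_abs h); ring).
  pose proof (Rabs_pos h).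
  assert (K * Rabs h <= eps).
  { apply (Rmult_le_compat_l K) in Hh2; [|lra]. replace (K * (eps / K)) with eps in Hh2 by (field; lra). lra. }
  apply Rmult_le_compat_r; auto.
Qed.

Lemma param_CD (F F1 : R -> Cplx -> Cplx) a b z0 : a < b ->
  (forall z, CcontOn (fun s => F s z) a b) -> CcontOn (fun s => F1 s z0) a b ->
  (exists M, 0 < M /\ forall s h, a <= s <= b -> Cnorm h <= 1 ->
      Cnorm (Csub (Csub (F s (Cadd z0 h)) (F s z0)) (Cmul (F1 s z0) h)) <= M * Cnorm h ^ 2) ->
  CD (fun z => CInt (fun s => F s z) a b) z0 (CInt (fun s => F1 s z0) a b).
Proof.
  intros Hab HF HF1 [M [HM P]] eps He.
  set (K := 2 * (b - a) * M).
  assert (HK : 0 < K) by (unfold K; nra).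
  exists (Rmin 1 (eps / K)). split. apply Rmin_case; [lra| apply Rdiv_lt_0_compat; lra].
  intros h Hh.
  assert (Hh1 : Cnorm h <= 1) by (pose proof (Rmin_l 1 (eps / K)); lra).
  assert (Hh2 : Cnorm h <= eps / K) by (pose proof (Rmin_r 1 (eps / K)); lra).
  assert (Cm : CcontOn (fun s => Cmul (F1 s z0) h) a b).
  { intros y Hy. apply Ccont_mul. apply HF1; auto. apply Ccont_const. }
  assert (E : Csub (Csub (CInt (fun s => F s (Cadd z0 h)) a b) (CInt (fun s => F s z0) a b)) (Cmul (CInt (fun s => F1 s z0) a b) h)
     = CInt (fun s => Csub (Csub (F s (Cadd z0 h)) (F s z0)) (Cmul (F1 s z0) h)) a b).
  { rewrite CInt_sub; [| lra | intros y Hy; apply Ccont_sub; [apply HF| apply HF]; auto | auto].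
    rewrite CInt_sub; [| lra | apply HF | apply HF].
    rewrite CInt_mulc; [| lra | auto]. reflexivity. }
  rewrite E. eapply Rle_trans. apply (CInt_const_bound _ a b (M * Cnorm h ^ 2)). lra.
  { intros y Hy. apply Ccont_sub. apply Ccont_sub; apply HF; auto. apply Cm; auto. }
  { intros y Hy. apply P; auto. }
  replace (2 * (b - a) * (M * Cnorm h ^ 2)) with (K * Cnorm h * Cnorm h) by (unfold K; ring).
  pose proof (Cnorm_ge0 h).
  assert (K * Cnorm h <= eps).
  { apply (Rmult_le_compat_l K) in Hh2; [|lra]. replace (K * (eps / K)) with eps in Hh2 by (field; lra). lra. }
  apply Rmult_le_compat_r; auto.
Qed.

Definition hfun a (al : nat) (s : R) (z : Cplx) : Cplx :=
  match al with O => w_fun a s z | S n => evalk a (kterms a n) s z end.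
Definition gfun a ts (be : nat) (s xi : R) : Cplx := evalg a (gterms be) (ts - s) xi.
Definition Phi a t0 ts (al be : nat) : Cplx -> R -> Cplx :=
  fun z xi => CInt (fun s => Cmul (gfun a ts be s xi) (hfun a al s z)) t0 ts.

Lemma gterms_S be : gterms (S be) = dgL (gterms be).
Proof. reflexivity. Qed.
Lemma kterms_S a n : kterms a (S n) = dkL a (kterms a n).
Proof. reflexivity. Qed.

Lemma g_taylor a t0 ts be xi : t0 <= ts -> exists M, 0 < M /\ forall s h, t0 <= s <= ts -> Rabs h <= 1 ->
  Cnorm (Csub (Csub (gfun a ts be s (xi + h)) (gfun a ts be s xi)) (Cscal h (gfun a ts (S be) s xi))) <= M * h ^ 2.
Proof.
  intro Hts.
  destruct (evalg_local a (ts - t0) (gterms (S (S be))) (Rabs xi + 1) ltac:(lra) ltac:(pose proof (Rabs_pos xi); lra)) as [B [HB PB]].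
  exists (2 * B). split. lra. intros s h Hs Hh.
  set (t := ts - s).
  pose proof (LD_taylor (evalgq (gterms be) t) (evalgq (gterms (S be)) t) (evalgq (gterms (S (S be))) t) (xi, a) (h, 0) B
    (LD_evalgq _ t) (LD_evalgq _ t)) as T.
  unfold gfun. fold t. rewrite !evalg_q.
  replace (xi + h, a) with (Cadd (xi, a) (h, 0)) by ceq.
  replace (Cscal h (evalgq (gterms (S be)) t (xi, a))) with (Cmul (evalgq (gterms (S be)) t (xi, a)) (h, 0))
    by (generalize (evalgq (gterms (S be)) t (xi, a)); intro; ceq).
  replace (h ^ 2) with (Cnorm (h, 0) ^ 2) by (rewrite Cnorm_pair0, pow2_abs; auto).
  replace (2 * B * Cnorm (h, 0) ^ 2) with (2 * B * Cnorm (h, 0) ^ 2) by ring. apply T.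
  intros t' Ht'. replace (line (xi, a) (h, 0) t') with (xi + t' * h, a) by (unfold line; ceq).
  rewrite <- evalg_q. apply PB. unfold t; lra.
  eapply Rle_trans. apply Rabs_triang. rewrite Rabs_mult, (Rabs_right t') by lra. nra.
Qed.

Lemma h_taylor a t0 ts al b : 0 < t0 -> t0 <= ts -> 0 <= b -> exists M, 0 < M /\ forall s z h, t0 <= s <= ts ->
  Rabs (snd z) <= b -> Cnorm h <= 1 ->
  Cnorm (Csub (Csub (hfun a al s (Cadd z h)) (hfun a al s z)) (Cmul (hfun a (S al) s z) h)) <= M * Cnorm h ^ 2.
Proof.
  intros H0 H1 Hb. destruct al as [|n].
  - destruct (w_taylor a t0 ts b H0 H1 Hb) as [M [HM P]]. exists M. split; auto.
    intros s z h Hs Hz Hh. simpl hfun. rewrite <- K_evalk. apply P; auto.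
  - destruct (evalk_bound a t0 ts (b + 1) (kterms a (S (S n))) H0 H1 ltac:(lra)) as [C [HC P]].
    exists (2 * C). split. lra. intros s z h Hs Hz Hh. simpl hfun.
    eapply Rle_trans. apply (LD_taylor (evalk a (kterms a n) s) (evalk a (kterms a (S n)) s) (evalk a (kterms a (S (S n))) s) z h C); try (apply LD_evalk_iter; lra).
    + intros t Ht. eapply Rle_trans. apply P; auto.
      unfold line. csimpl. pose proof (Cnorm_snd h).
      eapply Rle_trans; [apply Rabs_triang|]. rewrite Rabs_mult, (Rabs_right t) by lra. nra.
      assert (0 <= fst (line z h t) ^ 2) by apply pow2_ge_0.
      unfold Rdiv. rewrite <- (Rmult_1_r C) at 2. apply Rmult_le_compat_l. lra.
      rewrite <- Rinv_1. apply Rinv_le_contravar; lra.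
    + lra.
Qed.

Lemma h_bound a t0 ts al b : 0 < t0 -> t0 <= ts -> 0 <= b -> exists H, 0 < H /\ forall s z, t0 <= s <= ts ->
  Rabs (snd z) <= b -> Cnorm (hfun a al s z) <= H.
Proof.
  intros H0 H1 Hb. destruct al as [|n].
  - apply w_bound; auto.
  - destruct (evalk_bound a t0 ts b (kterms a n) H0 H1 Hb) as [C [HC P]].
    exists C. split; auto. intros s z Hs Hz. simpl hfun. eapply Rle_trans. apply P; auto.
    assert (0 <= fst z ^ 2) by apply pow2_ge_0.
    unfold Rdiv. rewrite <- (Rmult_1_r C) at 2. apply Rmult_le_compat_l. lra.
    rewrite <- Rinv_1. apply Rinv_le_contravar; lra.
Qed.

Lemma hfun_cont a al z s0 : 0 < s0 -> Ccont (fun s => hfun a al s z) s0.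
Proof. intro H. destruct al; simpl. apply w_cont_s; auto. apply evalk_cont; auto. Qed.

Lemma Phi_cont a t0 ts al be z xi : 0 < t0 -> CcontOn (fun s => Cmul (gfun a ts be s xi) (hfun a al s z)) t0 ts.
Proof. intros H y Hy. apply Ccont_mul. apply evalg_cont. apply hfun_cont. lra. Qed.

Lemma Dxi_Phi a t0 ts al be : 0 < t0 -> t0 < ts -> Dxi (Phi a t0 ts al be) = Phi a t0 ts al (S be).
Proof.
  intros H0 H1. apply functional_extensionality; intro z. apply functional_extensionality; intro xi.
  unfold Dxi. apply RD_Rderiv. unfold Phi.
  apply (param_RD (fun s x => Cmul (gfun a ts be s x) (hfun a al s z)) (fun s x => Cmul (gfun a ts (S be) s x) (hfun a al s z))); auto.
  - intro x. apply Phi_cont; auto.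
  - apply Phi_cont; auto.
  - destruct (g_taylor a t0 ts be xi ltac:(lra)) as [M [HM P]].
    destruct (h_bound a t0 ts al (Rabs (snd z)) H0 ltac:(lra) (Rabs_pos _)) as [Hh [HHh Q]].
    exists (M * Hh). split. nra. intros s h Hs Hh1.
    replace (Csub (Csub (Cmul (gfun a ts be s (xi + h)) (hfun a al s z)) (Cmul (gfun a ts be s xi) (hfun a al s z)))
       (Cscal h (Cmul (gfun a ts (S be) s xi) (hfun a al s z)))) with
       (Cmul (Csub (Csub (gfun a ts be s (xi + h)) (gfun a ts be s xi)) (Cscal h (gfun a ts (S be) s xi))) (hfun a al s z))
      by (generalize (gfun a ts be s (xi + h)) (gfun a ts be s xi) (gfun a ts (S be) s xi) (hfun a al s z); intros; ceq).
    rewrite Cnorm_mul. specialize (P s h Hs Hh1). specialize (Q s z Hs (Rle_refl _)).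
    pose proof (Cnorm_ge0 (hfun a al s z)). pose proof (Cnorm_ge0 (Csub (Csub (gfun a ts be s (xi + h)) (gfun a ts be s xi)) (Cscal h (gfun a ts (S be) s xi)))).
    assert (0 <= h^2) by apply pow2_ge_0.
    apply Rle_trans with ((M * h ^ 2) * Hh). apply Rmult_le_compat; auto. right; ring.
Qed.

Lemma Dz_Phi a t0 ts al be : 0 < t0 -> t0 < ts -> Dz (Phi a t0 ts al be) = Phi a t0 ts (S al) be.
Proof.
  intros H0 H1. apply functional_extensionality; intro z. apply functional_extensionality; intro xi.
  unfold Dz. apply CD_Cderiv. unfold Phi.
  apply (param_CD (fun s z => Cmul (gfun a ts be s xi) (hfun a al s z)) (fun s z => Cmul (gfun a ts be s xi) (hfun a (S al) s z))); auto.
  - intro x. apply Phi_cont; auto.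
  - apply Phi_cont; auto.
  - destruct (h_taylor a t0 ts al (Rabs (snd z)) H0 ltac:(lra) (Rabs_pos _)) as [M [HM P]].
    destruct (evalg_local a (ts - t0) (gterms be) (Rabs xi) ltac:(lra) (Rabs_pos _)) as [G [HG Q]].
    exists (G * M). split. nra. intros s h Hs Hh1.
    replace (Csub (Csub (Cmul (gfun a ts be s xi) (hfun a al s (Cadd z h))) (Cmul (gfun a ts be s xi) (hfun a al s z)))
       (Cmul (Cmul (gfun a ts be s xi) (hfun a (S al) s z)) h)) with
       (Cmul (gfun a ts be s xi) (Csub (Csub (hfun a al s (Cadd z h)) (hfun a al s z)) (Cmul (hfun a (S al) s z) h)))
      by (generalize (gfun a ts be s xi) (hfun a al s (Cadd z h)) (hfun a al s z) (hfun a (S al) s z); intros; ceq).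
    rewrite Cnorm_mul. specialize (P s z h Hs (Rle_refl _) Hh1). specialize (Q (ts - s) xi ltac:(lra) (Rle_refl _)).
    unfold gfun. pose proof (Cnorm_ge0 (evalg a (gterms be) (ts - s) xi)).
    pose proof (Cnorm_ge0 (Csub (Csub (hfun a al s (Cadd z h)) (hfun a al s z)) (Cmul (hfun a (S al) s z) h))).
    apply Rle_trans with (G * (M * Cnorm h ^ 2)). apply Rmult_le_compat; auto. right; ring.
Qed.

Lemma iter_Dxi a t0 ts be : 0 < t0 -> t0 < ts -> Nat.iter be Dxi (Phi a t0 ts 0 0) = Phi a t0 ts 0 be.
Proof.
  intros H0 H1. induction be. reflexivity. simpl. rewrite IHbe. apply Dxi_Phi; auto.
Qed.

Lemma iter_Dz a t0 ts al be : 0 < t0 -> t0 < ts -> Nat.iter al Dz (Phi a t0 ts 0 be) = Phi a t0 ts al be.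
Proof.
  intros H0 H1. induction al. reflexivity. simpl. rewrite IHal. apply Dz_Phi; auto.
Qed.

Lemma Cexp_arg_cont ts q s0 : Ccont (fun s => Cexp (Cscal (- (ts - s)) q)) s0.
Proof.
  eapply RD_Ccont. apply RD_Cexp. eapply (RD_rscal (fun s => - (ts - s)) (fun _ => q)).
  apply is_derive_Reals. auto_derive. auto. reflexivity. apply RD_const.
Qed.

Lemma psym_Phi a t0 ts : 0 < t0 -> t0 < ts -> p_sym a t0 ts = Phi a t0 ts 0 0.
Proof.
  intros H0 H1. apply functional_extensionality; intro z. apply functional_extensionality; intro xi.
  unfold p_sym, Phi. cbv zeta.
  rewrite <- CInt_cmul; [| lra | intros y Hy; apply Ccont_mul; [apply Cexp_arg_cont| apply w_cont_s; lra]].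
  f_equal. apply functional_extensionality; intro s.
  unfold gfun, gterms, evalg. simpl Nat.iter. cbn [sumC]. unfold gmon, Mon, hfun. simpl Cpow.
  replace (Cadd (Cscal (- (ts - s)) (Cmul (xi, a) (xi, a))) (Cscal 0 (xi, a))) with (Cscal (- (ts - s)) (Cmul (xi, a) (xi, a))) by ceq.
  generalize (Cexp (Cscal (- (ts - s)) (Cmul (xi, a) (xi, a)))) (w_fun a s z). intros E W. ceq.
Qed.

Lemma evalg_decay a T be L : 0 <= T -> (forall m, In m L -> ginv be m) -> exists D, 0 < D /\
  forall t xi, 0 <= t <= T -> Cnorm (evalg a L t xi) <= D * gdec be t xi.
Proof.
  intros HT HL. induction L as [|m L IH].
  - exists 1. split. lra. intros. unfold evalg. cbn [sumC]. rewrite Cnorm_C0.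
    pose proof (gdec_pos be t xi). lra.
  - destruct IH as [D2 [HD2 P2]]. intros; apply HL; right; auto.
    destruct (gmon_decay a T be m HT (HL m (or_introl eq_refl))) as [D1 [HD1 P1]].
    exists (D1 + D2). split. lra. intros t xi Ht. unfold evalg. cbn [sumC].
    eapply Rle_trans. apply Cnorm_tri. specialize (P1 t xi Ht). specialize (P2 t xi Ht). unfold evalg in P2.
    rewrite Rmult_plus_distr_r. lra.
Qed.

Lemma gdec_cont be ts xi s0 : continuous (fun s => gdec be (ts - s) xi) s0.
Proof.
  unfold gdec. apply (ex_derive_continuous (K:=R_AbsRing) (V:=R_NormedModule)). auto_derive. auto.
Qed.

Lemma RInt_gdec be t0 ts xi : t0 <= ts ->
  RInt (fun s => gdec be (ts - s) xi) t0 ts <= (ts - t0 + 2) * / japan xi ^ be.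
Proof.
  intro H.
  set (G := fun s => / japan xi ^ be * (s + 2 * exp (- ((ts - s) * xi ^ 2) / 2))).
  assert (E : RInt (fun s => gdec be (ts - s) xi) t0 ts = G ts - G t0).
  { apply is_RInt_unique. apply (is_RInt_derive (V:=R_CompleteNormedModule) G).
    - intros y _. unfold G, gdec. auto_derive. auto. replace (- ((ts + - y) * (xi * (xi * 1))) * / 2) with (- ((ts - y) * xi ^ 2) / 2) by (unfold Rdiv; ring). field. apply pow_nonzero, Rgt_not_eq, japan_pos.
    - intros y _. apply gdec_cont. }
  rewrite E. unfold G. replace (ts - ts) with 0 by ring.
  replace (- (0 * xi ^ 2) / 2) with 0 by field. rewrite exp_0.
  pose proof (exp_pos (- ((ts - t0) * xi ^ 2) / 2)).
  assert (0 < / japan xi ^ be) by (apply Rinv_0_lt_compat, pow_lt, japan_pos).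
  nra.
Qed.

Theorem part1 a t0 ts : 0 < t0 -> t0 < ts -> forall b, 0 < b -> forall al be : nat,
  exists Cst, 0 < Cst /\ forall z xi, Rabs (snd z) < b ->
    Cnorm (Nat.iter al Dz (Nat.iter be Dxi (p_sym a t0 ts)) z xi) <= Cst * / (japan xi ^ be).
Proof.
  intros H0 H1 b Hb al be.
  destruct (evalg_decay a (ts - t0) be (gterms be) ltac:(lra) (gterms_inv be)) as [D [HD PD]].
  destruct (h_bound a t0 ts al b H0 ltac:(lra) ltac:(lra)) as [H [HH PH]].
  exists (2 * (H * D) * (ts - t0 + 2)). split. { assert (0 < H * D) by (apply Rmult_lt_0_compat; auto). apply Rmult_lt_0_compat; lra. }
  intros z xi Hz.
  rewrite psym_Phi, iter_Dxi, iter_Dz by auto. unfold Phi.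
  eapply Rle_trans. apply (CInt_bound _ (fun s => (H * D) * gdec be (ts - s) xi)). lra.
  apply Phi_cont; auto.
  - intros y _. apply (continuous_mult (fun _ => H * D) (fun s => gdec be (ts - s) xi)). apply continuous_const. apply gdec_cont.
  - intros s Hs. rewrite Cnorm_mul. unfold gfun.
    specialize (PD (ts - s) xi ltac:(lra)). specialize (PH s z Hs ltac:(lra)).
    pose proof (Cnorm_ge0 (evalg a (gterms be) (ts - s) xi)). pose proof (Cnorm_ge0 (hfun a al s z)).
    pose proof (gdec_pos be (ts - s) xi).
    apply Rle_trans with ((D * gdec be (ts - s) xi) * H). apply Rmult_le_compat; auto. right; ring.
  - rewrite RInt_scalR. pose proof (RInt_gdec be t0 ts xi ltac:(lra)).
    assert (0 < H * D) by nra. 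
    apply Rle_trans with (2 * (H * D * ((ts - t0 + 2) * / japan xi ^ be))). nra. right; ring.
    apply (ex_RInt_continuous (V:=R_CompleteNormedModule)). intros; apply gdec_cont.
Qed.

Lemma xi2_exp_bound T xi : 0 < T -> xi ^ 2 * exp (- (T * xi ^ 2) / 2) <= 2 / T.
Proof.
  intro HT. set (v := T * xi ^ 2 / 2).
  assert (Hv : 0 <= v) by (unfold v; pose proof (pow2_ge_0 xi); nra).
  pose proof (pow_le_exp 1 v Hv) as P. simpl in P. rewrite !Rmult_1_r in P.
  replace (- (T * xi ^ 2) / 2) with (- v) by (unfold v; field).
  replace (xi ^ 2) with (2 / T * v) by (unfold v; field; lra).
  rewrite exp_Ropp. assert (0 < exp v) by apply exp_pos.
  assert (v * / exp v <= 1).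
  { apply (Rmult_le_reg_r (exp v)); auto. rewrite Rmult_assoc, Rinv_l by lra. lra. }
  assert (0 < 2 / T) by (apply Rdiv_lt_0_compat; lra).
  replace (2 / T * v * / exp v) with (2 / T * (v * / exp v)) by ring. nra.
Qed.

Theorem part2 a t0 ts : 0 < t0 -> t0 < ts ->
  exists Cst, 0 < Cst /\ forall x xi : R,
    Cnorm (Csub (p_sym a t0 ts (RtoC x) xi) (w_fun a ts (RtoC x))) <= Cst * / (japan xi ^ 2).
Proof.
  intros H0 H1. set (T := ts - t0).
  destruct (w_lip a t0 ts 0 H0 ltac:(lra) ltac:(lra)) as [L [HL PL]].
  destruct (w_bound a t0 ts 0 H0 ltac:(lra) ltac:(lra)) as [W [HW PW]].
  destruct (gmon_decay a T 2 (1, 1%nat, 2%nat) ltac:(unfold T; lra) ltac:(simpl; lia)) as [D2 [HD2 P2]].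
  destruct (gmon_decay a T 2 (1, 0%nat, 0%nat) ltac:(unfold T; lra) ltac:(simpl; lia)) as [D0 [HD0 P0]].
  assert (HT : 0 < T) by (unfold T; lra).
  set (Cst := 2 * (L * D2) * (T + 2) + D0 * W * (1 + 2 / T)).
  assert (HC : 0 < Cst).
  { unfold Cst. assert (0 < 2 / T) by (apply Rdiv_lt_0_compat; lra).
    assert (0 < L * D2) by (apply Rmult_lt_0_compat; auto). assert (0 < D0 * W) by (apply Rmult_lt_0_compat; auto).
    assert (0 < 2 * (L * D2) * (T + 2)) by (apply Rmult_lt_0_compat; lra).
    assert (0 < D0 * W * (1 + 2 / T)) by (apply Rmult_lt_0_compat; lra). lra. }
  exists Cst. split; auto. intros x xi.
  rewrite psym_Phi by auto. unfold Phi.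
  set (z := RtoC x). set (q := (xi, a)).
  set (g0 := fun s => gfun a ts 0 s xi).
  set (w := fun s => hfun a 0 s z). set (wT := w_fun a ts z).
  set (E := fun s => Mon 0 (- (ts - s)) 0 q).
  assert (G0 : forall s, g0 s = Mon 2 (- (ts - s)) 0 q).
  { intro s. unfold g0, gfun, gterms, evalg. simpl Nat.iter. cbn [sumC]. unfold gmon. fold q.
    generalize (Mon 2 (- (ts - s)) 0 q). intro. simpl pow. ceq. }
  assert (Cg0 : CcontOn g0 t0 ts) by (intros y Hy; apply evalg_cont).
  assert (Cw : CcontOn w t0 ts) by (intros y Hy; apply hfun_cont; lra).
  assert (FT : CInt g0 t0 ts = Csub (E ts) (E t0)).
  { apply CInt_FTC; auto. lra. intros s _. unfold E. eapply RD_val.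
    - unfold Mon. apply RD_mul. apply RD_const. apply RD_Cexp. apply RD_add.
      eapply (RD_rscal (fun s => - (ts - s)) (fun _ => Cmul q q)). apply is_derive_Reals. auto_derive. auto. reflexivity.
      apply RD_const. apply RD_const.
    - rewrite G0. unfold Mon. simpl Cpow. generalize (Cexp (Cadd (Cscal (- (ts - s)) (Cmul q q)) (Cscal 0 q))). intro.
      unfold q. ceq. }
  assert (Ets : E ts = C1).
  { unfold E, Mon. simpl Cpow. replace (Cadd (Cscal (- (ts - ts)) (Cmul q q)) (Cscal 0 q)) with (0, 0) by (unfold q; ceq).
    unfold Cexp. cbn [fst snd]. rewrite exp_0, cos_0, sin_0. ceq. }
  assert (Dec : CInt (fun s => Cmul (g0 s) (w s)) t0 ts =
     Cadd (CInt (fun s => Cmul (g0 s) (Csub (w s) wT)) t0 ts) (Cmul (CInt g0 t0 ts) wT)).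
  { replace (fun s => Cmul (g0 s) (Csub (w s) wT)) with (fun s => Csub (Cmul (g0 s) (w s)) (Cmul (g0 s) wT))
      by (apply functional_extensionality; intro s; generalize (g0 s) (w s); intros; ceq).
    rewrite CInt_sub; [| lra | intros y Hy; apply Ccont_mul; auto | intros y Hy; apply Ccont_mul; auto; apply Ccont_const].
    rewrite CInt_mulc; [| lra | auto]. generalize (CInt (fun s => Cmul (g0 s) (w s)) t0 ts) (CInt g0 t0 ts). intros; ceq. }
  change (CInt (fun s => Cmul (gfun a ts 0 s xi) (hfun a 0 s z)) t0 ts) with (CInt (fun s => Cmul (g0 s) (w s)) t0 ts).
  rewrite Dec, FT, Ets.
  replace (Csub (Cadd (CInt (fun s => Cmul (g0 s) (Csub (w s) wT)) t0 ts) (Cmul (Csub C1 (E t0)) wT)) wT)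
    with (Csub (CInt (fun s => Cmul (g0 s) (Csub (w s) wT)) t0 ts) (Cmul (E t0) wT))
    by (generalize (CInt (fun s => Cmul (g0 s) (Csub (w s) wT)) t0 ts) (E t0); intros; ceq).
  eapply Rle_trans. apply Cnorm_sub_tri.
  assert (J : 0 < / japan xi ^ 2) by (apply Rinv_0_lt_compat, pow_lt, japan_pos).
  assert (A1 : Cnorm (CInt (fun s => Cmul (g0 s) (Csub (w s) wT)) t0 ts) <= 2 * (L * D2) * (T + 2) * / japan xi ^ 2).
  { eapply Rle_trans. apply (CInt_bound _ (fun s => (L * D2) * gdec 2 (ts - s) xi)). lra.
    - intros y Hy. apply Ccont_mul; auto. apply Ccont_sub; auto. apply Ccont_const.
    - intros y _. apply (continuous_mult (fun _ => L * D2) (fun s => gdec 2 (ts - s) xi)). apply continuous_const. apply gdec_cont.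
    - intros s Hs. rewrite Cnorm_mul, G0.
      assert (Lw : Cnorm (Csub (w s) wT) <= L * (ts - s)).
      { unfold w, wT. simpl hfun. eapply Rle_trans. apply PL; [split; lra| split; lra| unfold z; simpl; rewrite Rabs_R0; lra].
        rewrite Rabs_left1 by lra. right; ring. }
      specialize (P2 (ts - s) xi ltac:(unfold T; lra)). unfold gmon in P2. rewrite Cnorm_scal in P2.
      rewrite Rabs_right in P2 by (simpl; lra). simpl pow in P2. rewrite Rmult_1_r, Rmult_1_l in P2.
      fold q in P2.
      pose proof (Cnorm_ge0 (Mon 2 (- (ts - s)) 0 q)).
      apply Rle_trans with (Cnorm (Mon 2 (- (ts - s)) 0 q) * (L * (ts - s))). apply Rmult_le_compat_l; auto.
      apply Rle_trans with (L * ((ts - s) * Cnorm (Mon 2 (- (ts - s)) 0 q))). right; ring.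
      rewrite Rmult_assoc. apply Rmult_le_compat_l; lra.
    - rewrite RInt_scalR. pose proof (RInt_gdec 2 t0 ts xi ltac:(lra)).
      fold T in H. assert (0 < L * D2) by (apply Rmult_lt_0_compat; auto).
      apply Rle_trans with (2 * (L * D2 * ((T + 2) * / japan xi ^ 2))). nra. right; ring.
      apply (ex_RInt_continuous (V:=R_CompleteNormedModule)). intros; apply gdec_cont. }
  assert (A2 : Cnorm (Cmul (E t0) wT) <= D0 * W * (1 + 2 / T) * / japan xi ^ 2).
  { rewrite Cnorm_mul.
    specialize (P0 T xi ltac:(lra)). unfold gmon in P0. rewrite Cnorm_scal in P0. simpl pow in P0.
    rewrite Rmult_1_r, Rabs_R1, Rmult_1_l in P0. fold q in P0.
    replace (Mon 0 (- T) 0 q) with (E t0) in P0 by (unfold E, T; reflexivity).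
    specialize (PW ts z ltac:(lra) ltac:(unfold z; simpl; rewrite Rabs_R0; lra)). fold wT in PW.
    unfold gdec in P0. pose proof (xi2_exp_bound T xi HT).
    pose proof (Cnorm_ge0 (E t0)). pose proof (Cnorm_ge0 wT).
    assert (Cnorm (E t0) <= D0 * (/ japan xi ^ 2 * (1 + 2 / T))).
    { eapply Rle_trans. apply P0. apply Rmult_le_compat_l. lra. apply Rmult_le_compat_l. lra. lra. }
    apply Rle_trans with (D0 * (/ japan xi ^ 2 * (1 + 2 / T)) * W). apply Rmult_le_compat; auto. right; ring. }
  unfold Cst. lra.
Qed.

Require Import Defs.

Theorem mainTheorem6 (a tau0 taus : R) (H0 : 0 < tau0) (H1 : tau0 < taus) :
  (forall b : R, 0 < b -> forall alpha beta : nat,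
     exists Cst : R, 0 < Cst /\
       forall (z : Cplx) (xi : R), Rabs (snd z) < b ->
         Cnorm (Nat.iter alpha Dz (Nat.iter beta Dxi (p_sym a tau0 taus)) z xi)
           <= Cst * / (japan xi ^ beta)) /\
  (exists Cst : R, 0 < Cst /\
     forall x xi : R,
       Cnorm (Csub (p_sym a tau0 taus (RtoC x) xi) (w_fun a taus (RtoC x)))
         <= Cst * / (japan xi ^ 2)).
Proof.
  split.
  - exact (part1 a tau0 taus H0 H1).
  - exact (part2 a tau0 taus H0 H1).
Qed.
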